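(* In the Coxeter arrangement of type $D_n$ ($n\ge2$): for $1\le i<j\le n$ the hyperplane $H_{i,j}=\{x_i=x_j\}$ has exactly $2^{j-i-1}$ shards, and the hyperplane $H_{i,-j}=\{x_i=-x_j\}$ has exactly $2^{j-i}3^{i-1}-2^{j-2}$ shards. Consequently the arrangement has $\sum_{1\le i<j\le n}\big(2^{j-i-1}+2^{j-i}3^{i-1}-2^{j-2}\big)=3^n-n2^{n-1}-n-1$ shards in total.
   Context: Shards. Let $V$ be a real Euclidean space with inner product $\langle\cdot,\cdot\rangle$, $\Phi\subset V$ a finite root system with a chosen set of positive roots $\Phi^+$, and $\mathcal A=\{H_\beta:\beta\in\Phi^+\}$ with $H_\beta=\{\lambda\in V:\langle\lambda,\beta\rangle=0\}$ (the Coxeter arrangement). The base region is $B=\{\lambda\in V:\langle\lambda,\beta\rangle>0\text{ for all }\beta\in\Phi^+\}$. For distinct $H,H'\in\mathcal A$ let $\mathcal A(H,H')$ be the set of hyperplanes of $\mathcal A$ containing $H\cap H'$ (a rank two subarrangement). Exactly one connected component $B'$ of $V\setminus\bigcup\mathcal A(H,H')$ contains $B$, and exactly two hyperplanes of $\mathcal A(H,H')$ contain facets of the closure of $B'$; these are the basic hyperplanes of $\mathcal A(H,H')$. Each non-basic $H''\in\mathcal A(H,H')$ is said to be cut by each of the two basic hyperplanes of $\mathcal A(H,H')$. For $H\in\mathcal A$ let $L_H$ be the set of hyperplanes of $\mathcal A$ that cut $H$ in some rank two subarrangement; the shards of $H$ are the closures of the connected components of $H\setminus\bigcup_{H_\gamma\in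 L_H}(H\cap H_\gamma)$. A shard of $\mathcal A$ is a shard of some $H\in\mathcal A$. Type $D_n$: $V=\mathbb R^n$ with the standard inner product, $\Phi^+=\{\varepsilon_j\pm\varepsilon_i:1\le i<j\le n\}$, base region $B=\{-x_2<\pm x_1<x_2<\cdots<x_n\}$; the hyperplanes are $H_{i,j}=\{x_i=x_j\}$ (root $\varepsilon_j-\varepsilon_i$) and $H_{i,-j}=\{x_i=-x_j\}$ (root $\varepsilon_j+\varepsilon_i$), $1\le i<j\le n$. *)

(* Defs.v *)
From Stdlib Require Import Reals Arith List.
Open Scope R_scope.

(** Points of V = R^n are represented by functions nat -> R whose
    coordinates 1..n are the meaningful ones; all other coordinates vanish. *)
Definition vec := nat -> R.

Definition in_V (n : nat) (x : vec) : Prop :=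
  forall k, (k = 0%nat \/ (n < k)%nat) -> x k = 0.

Fixpoint ip (n : nat) (x y : vec) : R :=
  match n with
  | O => 0
  | S m => ip m x y + x n * y n
  end.

Definition vsub (x y : vec) : vec := fun k => x k - y k.
Definition vadd (x y : vec) : vec := fun k => x k + y k.

Definition closure (n : nat) (S : vec -> Prop) : vec -> Prop :=
  fun x => in_V n x /\
    forall eps, 0 < eps -> exists y, S y /\ ip n (vsub x y) (vsub x y) < eps * eps.

Definition path_in (S : vec -> Prop) (x y : vec) : Prop :=
  exists g : R -> vec,
    (forall k, continuity (fun t => g t k)) /\
    (forall k, g 0 k = x k) /\ (forall k, g 1 k = y k) /\
    (forall t, 0 <= t <= 1 -> S (g t)).

Definition component (S : vec -> Prop) (x : vec) : vec -> Prop :=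
  fun y => S x /\ path_in S x y.

Definition Hyp (n : nat) (beta : vec) : vec -> Prop :=
  fun l => in_V n l /\ ip n l beta = 0.

Definition same_set (A B : vec -> Prop) : Prop := forall x, A x <-> B x.


Definition base_region (n : nat) (Phi : list vec) : vec -> Prop :=
  fun l => in_V n l /\ forall b, In b Phi -> ip n l b > 0.

(** gamma's hyperplane belongs to the rank-two subarrangement A(H_b1, H_b2):
    it contains H_b1 ∩ H_b2 *)
Definition in_A2 (n : nat) (Phi : list vec) (b1 b2 g : vec) : Prop :=
  In g Phi /\ forall x, Hyp n b1 x -> Hyp n b2 x -> Hyp n g x.

Definition A2_complement (n : nat) (Phi : list vec) (b1 b2 : vec) : vec -> Prop :=
  fun x => in_V n x /\ forall g, in_A2 n Phi b1 b2 g -> ~ Hyp n g x.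

Definition Bprime (n : nat) (Phi : list vec) (b1 b2 : vec) : vec -> Prop :=
  fun y => exists b, base_region n Phi b /\
    component (A2_complement n Phi b1 b2) b y.

(** the hyperplane H contains a facet of the closed polyhedral cone C:
    C ∩ H contains a nonempty relatively open subset of H
    (i.e. C ∩ H is a face of codimension one lying in H) *)
Definition contains_facet (n : nat) (H C : vec -> Prop) : Prop :=
  exists p, H p /\ exists eps, 0 < eps /\
    forall q, H q -> ip n (vsub p q) (vsub p q) < eps * eps -> C q.

Definition basic (n : nat) (Phi : list vec) (b1 b2 g : vec) : Prop :=
  in_A2 n Phi b1 b2 g /\
  contains_facet n (Hyp n g) (closure n (Bprime n Phi b1 b2)).

Definition cuts (n : nat) (Phi : list vec) (g b : vec) : Prop :=
  exists b1 b2, In b1 Phi /\ In b2 Phi /\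
    ~ same_set (Hyp n b1) (Hyp n b2) /\
    in_A2 n Phi b1 b2 b /\ ~ basic n Phi b1 b2 b /\ basic n Phi b1 b2 g.

Definition shard_domain (n : nat) (Phi : list vec) (b : vec) : vec -> Prop :=
  fun x => Hyp n b x /\ forall g, In g Phi -> cuts n Phi g b -> ~ Hyp n g x.

Definition is_shard_of (n : nat) (Phi : list vec) (b : vec) (S : vec -> Prop) : Prop :=
  exists x, shard_domain n Phi b x /\
    same_set S (closure n (component (shard_domain n Phi b) x)).

Definition is_shard (n : nat) (Phi : list vec) (S : vec -> Prop) : Prop :=
  exists b, In b Phi /\ is_shard_of n Phi b S.

Definition num_sets (P : (vec -> Prop) -> Prop) (N : nat) : Prop :=
  exists f : nat -> (vec -> Prop),
    (forall k, (k < N)%nat -> P (f k)) /\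
    (forall k l, (k < N)%nat -> (l < N)%nat -> same_set (f k) (f l) -> k = l) /\
    (forall S, P S -> exists k, (k < N)%nat /\ same_set S (f k)).

Definition eps (i : nat) : vec := fun k => if Nat.eqb k i then 1 else 0.

(** root eps_j - eps_i, hyperplane H_{i,j} = {x_i = x_j} *)
Definition root_minus (i j : nat) : vec := vsub (eps j) (eps i).
(** root eps_j + eps_i, hyperplane H_{i,-j} = {x_i = -x_j} *)
Definition root_plus (i j : nat) : vec := vadd (eps j) (eps i).

Definition PhiD (n : nat) : list vec :=
  flat_map (fun j => flat_map (fun i => root_minus i j :: root_plus i j :: nil)
                              (seq 1 (j - 1)))
           (seq 1 n).

Definition sum_pairs (n : nat) (F : nat -> nat -> nat) : nat :=
  list_sum (map (fun j => list_sum (map (fun i => F i j) (seq 1 (j - 1)))) (seq 1 n)).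

(* Main.v *)
Require Import Defs.
From Stdlib Require Import Reals Arith List Lra Lia Psatz Classical FunctionalExtensionality FinFun.

Open Scope R_scope.

Lemma ip_ext_l n x x' y : (forall k, (1 <= k <= n)%nat -> x k = x' k) -> ip n x y = ip n x' y.
Proof. induction n; simpl; intros H; auto. rewrite IHn by (intros; apply H; lia). rewrite (H (S n)) by lia. auto. Qed.

Lemma ip_ext_r n x y y' : (forall k, (1 <= k <= n)%nat -> y k = y' k) -> ip n x y = ip n x y'.
Proof. induction n; simpl; intros H; auto. rewrite IHn by (intros; apply H; lia). rewrite (H (S n)) by lia. auto. Qed.

Lemma ip_sym n x y : ip n x y = ip n y x.
Proof. induction n; simpl; auto. rewrite IHn; ring. Qed.

Lemma ip_lin_l n a b x y z : ip n (fun k => a * x k + b * y k) z = a * ip n x z + b * ip n y z.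
Proof. induction n; simpl. ring. rewrite IHn; ring. Qed.

Lemma ip_lin_r n a b x y z : ip n z (fun k => a * x k + b * y k) = a * ip n z x + b * ip n z y.
Proof. rewrite ip_sym, ip_lin_l, (ip_sym n x), (ip_sym n y); auto. Qed.

Lemma ip_vsub_l n x y z : ip n (vsub x y) z = ip n x z - ip n y z.
Proof. unfold vsub. induction n; simpl. ring. rewrite IHn; ring. Qed.
Lemma ip_vsub_r n x y z : ip n z (vsub x y) = ip n z x - ip n z y.
Proof. rewrite ip_sym, ip_vsub_l, !(ip_sym n z); auto. Qed.
Lemma ip_vadd_l n x y z : ip n (vadd x y) z = ip n x z + ip n y z.
Proof. unfold vadd. induction n; simpl. ring. rewrite IHn; ring. Qed.
Lemma ip_vadd_r n x y z : ip n z (vadd x y) = ip n z x + ip n z y.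
Proof. rewrite ip_sym, ip_vadd_l, !(ip_sym n z); auto. Qed.
Lemma ip_scal_l n a x z : ip n (fun k => a * x k) z = a * ip n x z.
Proof. induction n; simpl. ring. rewrite IHn; ring. Qed.
Lemma ip_opp_r n x z : ip n z (fun k => - x k) = - ip n z x.
Proof. induction n; simpl. ring. rewrite IHn; ring. Qed.

Lemma ip_nonneg n x : 0 <= ip n x x.
Proof. induction n; simpl. lra. nra. Qed.

Lemma ip_zero n x : ip n x x = 0 -> forall k, (1 <= k <= n)%nat -> x k = 0.
Proof. induction n; simpl; intros H k Hk. lia.
  pose proof (ip_nonneg n x). assert (x (S n) * x (S n) = 0) by nra.
  assert (ip n x x = 0) by nra.
  destruct (Nat.eq_dec k (S n)). subst. nra. apply IHn; auto; lia. Qed.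

Lemma CS n x y : ip n x y * ip n x y <= ip n x x * ip n y y.
Proof.
  destruct (Req_dec (ip n y y) 0) as [E|E].
  - assert (forall k, (1 <= k <= n)%nat -> y k = 0) by (apply ip_zero; auto).
    rewrite (ip_ext_r n x y (fun _ => 0)) by auto.
    replace (ip n x (fun _ => 0)) with 0. rewrite E; lra.
    clear. induction n; simpl; auto; rewrite <- IHn; ring.
  - pose proof (ip_nonneg n y).
    set (s := ip n x y / ip n y y).
    pose proof (ip_nonneg n (fun k => 1 * x k + (- s) * y k)) as H0.
    rewrite ip_lin_l, !ip_lin_r in H0.
    rewrite (ip_sym n y x) in H0.
    assert (0 < ip n y y) by lra.
    assert (Hs : s * ip n y y = ip n x y) by (unfold s; field; lra).
    nra.
Qed.

Lemma ip_zero_l n y : ip n (fun _ => 0) y = 0.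
Proof. induction n; simpl; auto; rewrite IHn; ring. Qed.

Lemma ip_eps_r n x m : (1 <= m <= n)%nat -> ip n x (eps m) = x m.
Proof. induction n; intros H; simpl. lia.
  destruct (Nat.eq_dec m (S n)).
  - subst. assert (E: eps (S n) (S n) = 1) by (unfold eps; rewrite Nat.eqb_refl; auto).
    rewrite E. rewrite (ip_ext_r n x _ (fun _ => 0)).
    rewrite ip_sym, ip_zero_l. ring.
    intros k Hk. unfold eps. destruct (Nat.eqb_spec k (S n)); auto; lia.
  - assert (E: eps m (S n) = 0) by (unfold eps; destruct (Nat.eqb_spec (S n) m); auto; lia).
    rewrite E, IHn by lia; ring. Qed.

Lemma ip_minus n x i j : (1 <= i <= n)%nat -> (1 <= j <= n)%nat -> ip n x (root_minus i j) = x j - x i.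
Proof. intros. unfold root_minus. rewrite ip_vsub_r, !ip_eps_r; auto. Qed.
Lemma ip_plus n x i j : (1 <= i <= n)%nat -> (1 <= j <= n)%nat -> ip n x (root_plus i j) = x j + x i.
Proof. intros. unfold root_plus. rewrite ip_vadd_r, !ip_eps_r; auto. Qed.

Lemma ip_cont n (g : R -> vec) y : (forall k, continuity (fun t => g t k)) -> continuity (fun t => ip n (g t) y).
Proof. intros H. induction n; simpl. apply continuity_const. intros ? ?; auto.
  apply continuity_plus; auto. apply continuity_mult; auto. apply continuity_const; intros ? ?; auto. Qed.


Open Scope R_scope.

Definition Dom (n : nat) (Z L : list vec) (P : vec -> Prop) (x : vec) : Prop :=
  in_V n x /\ (forall z, In z Z -> ip n x z = 0) /\ (forall g, In g L -> P g -> ip n x g <> 0).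

Definition samesign (n : nat) (L : list vec) (P : vec -> Prop) (x y : vec) : Prop :=
  forall g, In g L -> P g -> (0 < ip n x g <-> 0 < ip n y g).

Lemma path_mono (S S' : vec -> Prop) x y : (forall z, S z -> S' z) -> path_in S x y -> path_in S' x y.
Proof. intros H [g [H1 [H2 [H3 H4]]]]. exists g; repeat split; auto. Qed.

Lemma comp_ext (S S' : vec -> Prop) x y : same_set S S' -> (component S x y <-> component S' x y).
Proof. intros H; unfold component; split; intros [A B]; split.
  apply H; auto. eapply path_mono; [|exact B]; intros; apply H; auto.
  apply H; auto. eapply path_mono; [|exact B]; intros; apply H; auto. Qed.

Lemma sign_const (f : R -> R) : continuity f -> (forall t, 0 <= t <= 1 -> f t <> 0) ->
  (0 < f 0 <-> 0 < f 1).
Proof. intros Hc Hn.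
  assert (H0 := Hn 0 ltac:(lra)). assert (H1 := Hn 1 ltac:(lra)).
  split; intros H.
  - destruct (Rlt_dec 0 (f 1)); auto. exfalso.
    destruct (IVT (fun t => - f t) 0 1) as [z [Hz Hz']].
    + apply continuity_opp; auto.
    + lra.
    + lra.
    + lra.
    + apply (Hn z Hz). lra.
  - destruct (Rlt_dec 0 (f 0)); auto. exfalso.
    destruct (IVT f 0 1) as [z [Hz Hz']]; auto. lra. lra. apply (Hn z Hz); auto.
Qed.

Lemma comp_char n Z L P x y :
  component (Dom n Z L P) x y <-> (Dom n Z L P x /\ Dom n Z L P y /\ samesign n L P x y).
Proof. split.
  - intros [Hx [g [Hc [H0 [H1 H2]]]]].
    assert (E0 : g 0 = x) by (apply functional_extensionality; auto).
    assert (E1 : g 1 = y) by (apply functional_extensionality; auto).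
    split; auto. split. rewrite <- E1; apply H2; lra.
    intros h Hh Ph. rewrite <- E0, <- E1.
    apply (sign_const (fun t => ip n (g t) h)). apply ip_cont; auto.
    intros t Ht. apply (H2 t Ht); auto.
  - intros [Hx [Hy Hs]]. split; auto.
    exists (fun t k => (1 - t) * x k + t * y k). repeat split.
    + intros k. reg.
    + intros k; simpl; ring.
    + intros k; simpl; ring.
    + intros k [Hk|Hk]; destruct Hx as [Vx _]; destruct Hy as [Vy _];
        rewrite Vx, Vy; auto; ring.
    + intros z Hz. rewrite ip_lin_l. destruct Hx as [_ [Zx _]]; destruct Hy as [_ [Zy _]].
      rewrite Zx, Zy; auto; ring.
    + intros h Hh Ph. rewrite ip_lin_l. destruct Hx as [_ [_ Nx]]; destruct Hy as [_ [_ Ny]].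
      specialize (Hs h Hh Ph). specialize (Nx h Hh Ph). specialize (Ny h Hh Ph).
      destruct (Rlt_dec 0 (ip n x h)).
      * assert (0 < ip n y h) by tauto. nra.
      * assert (ip n x h < 0) by lra. assert (~ 0 < ip n y h) by tauto.
        assert (ip n y h < 0) by lra. nra.
Qed.

Lemma closure_ge (n : nat) (S : vec -> Prop) g y :
  (forall z, S z -> 0 <= ip n z g) -> closure n S y -> 0 <= ip n y g.
Proof. intros HS [Vy Hy]. destruct (Rle_dec 0 (ip n y g)) as [|Hn]; auto. exfalso.
  set (a := - ip n y g). assert (Ha : 0 < a) by (unfold a; lra).
  pose proof (ip_nonneg n g) as Gg.
  destruct (Hy (a / (ip n g g + 1))) as [z [Sz Dz]].
  { apply Rdiv_lt_0_compat; lra. }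
  specialize (HS z Sz).
  pose proof (CS n (vsub y z) g) as C. rewrite ip_vsub_l in C.
  assert (a * a <= (ip n y g - ip n z g) * (ip n y g - ip n z g)) by (unfold a in *; nra).
  set (e := a / (ip n g g + 1)) in *.
  assert (He : e * (ip n g g + 1) = a) by (unfold e; field; lra).
  pose proof (ip_nonneg n (vsub y z)).
  assert (a * a <= e * e * ip n g g) by nra.
  nra.
Qed.

Lemma closure_self n (S : vec -> Prop) x : in_V n x -> S x -> closure n S x.
Proof. intros V Sx. split; auto. intros e He. exists x. split; auto.
  rewrite (ip_ext_l n _ (fun _ => 0)). rewrite ip_zero_l. nra.
  intros k _. unfold vsub; ring. Qed.

Lemma closure_mono n (S S' : vec -> Prop) y : (forall z, S z -> S' z) -> closure n S y -> closure n S' y.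
Proof. intros H [V C]. split; auto. intros e He. destruct (C e He) as [z [Sz Dz]]. exists z; auto. Qed.

Lemma closure_ext n (S S' : vec -> Prop) : same_set S S' -> same_set (closure n S) (closure n S').
Proof. intros H y. split; apply closure_mono; intros; apply H; auto. Qed.

Lemma closure_cone n (S : vec -> Prop) (L : list vec) (P : vec -> Prop) b0 y :
  (forall z, in_V n z -> (forall g, In g L -> P g -> 0 < ip n z g) -> S z) ->
  in_V n b0 -> (forall g, In g L -> P g -> 0 < ip n b0 g) ->
  in_V n y -> (forall g, In g L -> P g -> 0 <= ip n y g) -> closure n S y.
Proof. intros HS V0 P0 Vy Py. split; auto. intros e He.
  set (M := ip n b0 b0). pose proof (ip_nonneg n b0) as HM. fold M in HM.
  set (t := e / (M + 1)). assert (Ht : 0 < t) by (unfold t; apply Rdiv_lt_0_compat; lra).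
  exists (fun k => 1 * y k + t * b0 k). split.
  - apply HS. intros k Hk. rewrite Vy, V0; auto; ring.
    intros g Hg Pg. rewrite ip_lin_l. specialize (Py g Hg Pg). specialize (P0 g Hg Pg). nra.
  - rewrite (ip_ext_l n _ (fun k => (-t) * b0 k + 0 * b0 k)) by (intros; unfold vsub; ring).
    rewrite (ip_ext_r n _ _ (fun k => (-t) * b0 k + 0 * b0 k)) by (intros; unfold vsub; ring).
    rewrite ip_lin_l, !ip_lin_r. fold M.
    assert (t * (M + 1) = e) by (unfold t; field; lra). nra.
Qed.

Open Scope R_scope.

Lemma In_PhiD n g : In g (PhiD n) <-> exists i j, (1 <= i)%nat /\ (i < j)%nat /\ (j <= n)%nat /\
   (g = root_minus i j \/ g = root_plus i j).
Proof. unfold PhiD. rewrite in_flat_map. split.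
  - intros [j [Hj Hg]]. rewrite in_seq in Hj. rewrite in_flat_map in Hg.
    destruct Hg as [i [Hi Hg]]. rewrite in_seq in Hi. exists i, j.
    repeat split; try lia. simpl in Hg. intuition.
  - intros [i [j [H1 [H2 [H3 H4]]]]]. exists j. rewrite in_seq. split. lia.
    rewrite in_flat_map. exists i. rewrite in_seq. split. lia. simpl. intuition.
Qed.

Ltac eqbs := repeat match goal with |- context [Nat.eqb ?a ?b] => destruct (Nat.eqb_spec a b) end.
Ltac eqbsH := repeat match goal with H : context [Nat.eqb ?a ?b] |- _ => destruct (Nat.eqb_spec a b) end.

Lemma root_minus_V n i j : (1 <= i)%nat -> (j <= n)%nat -> (i < j)%nat -> in_V n (root_minus i j).
Proof. intros. intros k Hk. unfold root_minus, vsub, eps. eqbs; try lia; lra. Qed.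
Lemma root_plus_V n i j : (1 <= i)%nat -> (j <= n)%nat -> (i < j)%nat -> in_V n (root_plus i j).
Proof. intros. intros k Hk. unfold root_plus, vadd, eps. eqbs; try lia; lra. Qed.

Lemma PhiD_V n g : In g (PhiD n) -> in_V n g.
Proof. rewrite In_PhiD. intros [i [j [? [? [? [E|E]]]]]]; subst.
  apply root_minus_V; auto. apply root_plus_V; auto. Qed.

Definition b0 (n : nat) : vec := fun k => if andb (Nat.leb 1 k) (Nat.leb k n) then INR k else 0.

Lemma b0_V n : in_V n (b0 n).
Proof. intros k Hk. unfold b0. destruct (Nat.leb_spec 1 k); destruct (Nat.leb_spec k n); simpl; auto; lia. Qed.

Lemma b0_val n k : (1 <= k <= n)%nat -> b0 n k = INR k.
Proof. intros. unfold b0. destruct (Nat.leb_spec 1 k); destruct (Nat.leb_spec k n); simpl; auto; lia. Qed.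

Lemma ip_b0_minus n i j : (1 <= i)%nat -> (i < j)%nat -> (j <= n)%nat -> ip n (b0 n) (root_minus i j) = INR j - INR i.
Proof. intros. rewrite ip_minus, !b0_val by lia. auto. Qed.
Lemma ip_b0_plus n i j : (1 <= i)%nat -> (i < j)%nat -> (j <= n)%nat -> ip n (b0 n) (root_plus i j) = INR j + INR i.
Proof. intros. rewrite ip_plus, !b0_val by lia. auto. Qed.

Lemma b0_pos n g : In g (PhiD n) -> 0 < ip n (b0 n) g.
Proof. rewrite In_PhiD. intros [i [j [? [? [? [E|E]]]]]]; subst.
  rewrite ip_b0_minus by lia. apply Rlt_0_minus. apply lt_INR; lia.
  rewrite ip_b0_plus by lia. pose proof (lt_0_INR i ltac:(lia)). pose proof (lt_0_INR j ltac:(lia)). lra. Qed.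

Ltac rootval := unfold root_minus, root_plus, vsub, vadd, eps.

Lemma ip_root_root n u v : In u (PhiD n) -> In v (PhiD n) ->
  u = v \/ ip n u v = -1 \/ ip n u v = 0 \/ ip n u v = 1.
Proof. rewrite !In_PhiD. intros [i [j [? [? [? [E|E]]]]]] [k [l [? [? [? [F|F]]]]]]; subst;
  first [rewrite ip_minus by lia | rewrite ip_plus by lia]; rootval; eqbs; subst;
  try (left; reflexivity); try lia; right; lra.
Qed.

Lemma ip_root_self n u : In u (PhiD n) -> ip n u u = 2.
Proof. rewrite !In_PhiD. intros [i [j [? [? [? [E|E]]]]]]; subst;
  first [rewrite ip_minus by lia | rewrite ip_plus by lia]; rootval; eqbs; subst; try lia; lra.
Qed.

Open Scope R_scope.

Definition fsum n (u v w : vec) := forall x, ip n x u = ip n x v + ip n x w.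

Ltac ipr := repeat first [rewrite ip_minus by lia | rewrite ip_plus by lia].

Ltac cand1 n d a b :=
  exists d; split; [apply In_PhiD; exists a, b; repeat split; auto; lia | ];
  first [ left; intros x; ipr; ring | right; intros x; ipr; ring ].
Ltac cand n a b := first [ cand1 n (root_minus a b) a b | cand1 n (root_plus a b) a b ].

Ltac cands n := match goal with a : nat, b : nat |- _ => cand n a b end.

Lemma ip_one_diff n u v : In u (PhiD n) -> In v (PhiD n) -> ip n u v = 1 ->
  exists d, In d (PhiD n) /\ (fsum n u v d \/ fsum n v u d).
Proof. unfold fsum. intros Hu Hv. rewrite !In_PhiD in Hu, Hv.
  destruct Hu as [i [j [? [? [? [E|E]]]]]]; destruct Hv as [k [l [? [? [? [F|F]]]]]]; subst;
  intros Hc; rewrite ?ip_minus, ?ip_plus in Hc by lia; unfold root_minus, root_plus, vsub, vadd, eps in Hc;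
  eqbsH; subst; try lra; try lia;
  try (cands n);
  try destruct (Nat.lt_ge_cases i k); try destruct (Nat.lt_ge_cases j l);
  try destruct (Nat.lt_ge_cases i l); try destruct (Nat.lt_ge_cases j k);
  try lia; cands n.
Qed.

Open Scope R_scope.

Lemma A2c_Dom n Phi b1 b2 : same_set (A2_complement n Phi b1 b2) (Dom n nil Phi (in_A2 n Phi b1 b2)).
Proof. intros x. unfold A2_complement, Dom, Hyp. split.
  - intros [V H]. repeat split; auto. intros z []. intros g Hg Pg E. apply (H g Pg); auto.
  - intros [V [_ H]]. split; auto. intros g Pg [_ E]. apply (H g (proj1 Pg) Pg E). Qed.

Lemma Bprime_char n b1 b2 y : Bprime n (PhiD n) b1 b2 y <->
  (in_V n y /\ forall g, In g (PhiD n) -> in_A2 n (PhiD n) b1 b2 g -> 0 < ip n y g).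
Proof. unfold Bprime. split.
  - intros [b [[Vb Pb] C]]. apply (comp_ext _ _ _ _ (A2c_Dom n (PhiD n) b1 b2)) in C.
    apply comp_char in C. destruct C as [_ [Dy S]]. split. apply Dy.
    intros g Hg Ag. apply (S g Hg Ag). apply Pb; auto.
  - intros [Vy Py]. exists (b0 n). split. split. apply b0_V. intros; apply Rlt_gt, b0_pos; auto.
    apply (comp_ext _ _ _ _ (A2c_Dom n (PhiD n) b1 b2)). apply comp_char.
    split. split. apply b0_V. split. intros z []. intros g Hg _. pose proof (b0_pos n g Hg); lra.
    split. split; auto. split. intros z []. intros g Hg Ag. pose proof (Py g Hg Ag); lra.
    intros g Hg Ag. split; intros; auto. apply b0_pos; auto.
Qed.

Lemma clBprime_char n b1 b2 y : closure n (Bprime n (PhiD n) b1 b2) y <->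
  (in_V n y /\ forall g, In g (PhiD n) -> in_A2 n (PhiD n) b1 b2 g -> 0 <= ip n y g).
Proof. split.
  - intros C. split. apply C. intros g Hg Ag. apply (closure_ge n (Bprime n (PhiD n) b1 b2) g y); auto.
    intros z Bz. apply Bprime_char in Bz. left. apply Bz; auto.
  - intros [Vy Py]. apply (closure_cone n _ (PhiD n) (in_A2 n (PhiD n) b1 b2) (b0 n)); auto.
    intros z Vz Pz. apply Bprime_char; auto. apply b0_V. intros; apply b0_pos; auto.
Qed.

Lemma finmin (L : list vec) (Q : vec -> Prop) (f : vec -> R) :
  (forall g, In g L -> Q g -> 0 < f g) -> exists m, 0 < m /\ forall g, In g L -> Q g -> m <= f g.
Proof. induction L as [|a L IH]; intros H.
  - exists 1. split. lra. intros g [].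
  - destruct IH as [m [Hm Hm']]. intros; apply H; simpl; auto.
    destruct (classic (Q a)) as [Qa|Qa].
    + assert (0 < f a) by (apply H; simpl; auto).
      exists (Rmin m (f a)). split. apply Rmin_pos; auto.
      intros g [E|Hg] Qg. subst. apply Rmin_r. eapply Rle_trans. apply Rmin_l. auto.
    + exists m. split; auto. intros g [E|Hg] Qg. subst; contradiction. auto.
Qed.

Definition witness n b1 b2 g := exists p, in_V n p /\ ip n p g = 0 /\
  forall h, In h (PhiD n) -> in_A2 n (PhiD n) b1 b2 h -> h <> g -> 0 < ip n p h.

Lemma ip_root_ne n u v : In u (PhiD n) -> In v (PhiD n) -> u <> v -> ip n u v = -1 \/ ip n u v = 0 \/ ip n u v = 1.
Proof. intros Hu Hv N. destruct (ip_root_root n u v Hu Hv) as [E|E]; tauto. Qed.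

Lemma basic_iff n b1 b2 g : In g (PhiD n) ->
  (basic n (PhiD n) b1 b2 g <-> in_A2 n (PhiD n) b1 b2 g /\ witness n b1 b2 g).
Proof. intros Hg. unfold basic. split.
  - intros [A [p [[Vp Hp] [e [He F]]]]]. split; auto. exists p. split; auto. split; auto.
    intros h Hh Ah Nh. destruct (Rlt_dec 0 (ip n p h)) as [|Np]; auto. exfalso.
    set (c := ip n h g).
    assert (Hc : c = -1 \/ c = 0 \/ c = 1) by (apply ip_root_ne; auto).
    set (w := fun k => 2 * h k + (- c) * g k).
    assert (Vw : in_V n w) by (intros k Hk; unfold w; rewrite (PhiD_V n h), (PhiD_V n g); auto; ring).
    assert (wg : ip n w g = 0) by (unfold w; rewrite ip_lin_l, ip_root_self; auto; unfold c; ring).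
    assert (wh : ip n w h = 4 - c * c) by (unfold w; rewrite ip_lin_l, ip_root_self; auto;
      unfold c; rewrite ip_sym; ring).
    set (W := ip n w w). pose proof (ip_nonneg n w) as HW. fold W in HW.
    set (s := e / (W + 1)). assert (Hs : 0 < s) by (unfold s; apply Rdiv_lt_0_compat; lra).
    set (q := fun k => 1 * p k + (- s) * w k).
    assert (Hq : Hyp n g q).
    { split. intros k Hk. unfold q. rewrite Vp, Vw; auto; ring. unfold q. rewrite ip_lin_l, wg, Hp; ring. }
    assert (Dq : ip n (vsub p q) (vsub p q) < e * e).
    { rewrite (ip_ext_l n _ (fun k => s * w k + 0 * w k)) by (intros; unfold vsub, q; ring).
      rewrite (ip_ext_r n _ _ (fun k => s * w k + 0 * w k)) by (intros; unfold vsub, q; ring).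
      rewrite ip_lin_l, !ip_lin_r. fold W.
      assert (s * (W + 1) = e) by (unfold s; field; lra). nra. }
    specialize (F q Hq Dq). apply clBprime_char in F. destruct F as [_ F].
    specialize (F h Hh Ah). unfold q in F. rewrite ip_lin_l, wh in F.
    assert (0 <= c * c <= 1) by (destruct Hc as [E|[E|E]]; rewrite E; lra). nra.
  - intros [A [p [Vp [Hp Pp]]]]. split; auto. exists p. split. split; auto.
    destruct (finmin (PhiD n) (fun h => in_A2 n (PhiD n) b1 b2 h /\ h <> g) (fun h => ip n p h)) as [m [Hm Hm']].
    { intros h Hh [Ah Nh]; apply Pp; auto. }
    exists (m / 2). split. lra. intros q [Vq Hq] Dq. apply clBprime_char. split; auto.
    intros h Hh Ah. destruct (classic (h = g)) as [E|Nh]. subst. lra.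
    specialize (Hm' h Hh (conj Ah Nh)).
    pose proof (CS n (vsub p q) h) as C. rewrite (ip_root_self n h Hh) in C. rewrite ip_vsub_l in C.
    assert (Hd : (ip n p h - ip n q h) * (ip n p h - ip n q h) < m * m).
    { pose proof (ip_nonneg n (vsub p q)). nra. }
    destruct (Rle_dec 0 (ip n q h)); auto. nra.
Qed.

Open Scope R_scope.

Definition span_ip n (g u v : vec) := exists l m, forall x, ip n x g = l * ip n x u + m * ip n x v.

Lemma ip_lin3_l n (g u v y : vec) l m : ip n (fun k => g k - l * u k - m * v k) y = ip n g y - l * ip n u y - m * ip n v y.
Proof. induction n; simpl. ring. rewrite IHn; ring. Qed.
Lemma ip_lin3_r n (g u v y : vec) l m : ip n y (fun k => g k - l * u k - m * v k) = ip n y g - l * ip n y u - m * ip n y v.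
Proof. induction n; simpl. ring. rewrite IHn; ring. Qed.

Lemma vanish_span n u v g : In u (PhiD n) -> In v (PhiD n) -> u <> v -> in_V n g ->
  (forall x, Hyp n u x -> Hyp n v x -> Hyp n g x) -> span_ip n g u v.
Proof. intros Hu Hv N Vg H.
  set (c := ip n u v). assert (Hc : c = -1 \/ c = 0 \/ c = 1) by (apply ip_root_ne; auto).
  set (c1 := ip n g u). set (c2 := ip n g v).
  assert (D : 4 - c * c > 0) by (destruct Hc as [E|[E|E]]; rewrite E; lra).
  set (l := (2 * c1 - c * c2) / (4 - c * c)). set (m := (2 * c2 - c * c1) / (4 - c * c)).
  set (g' := fun k => g k - l * u k - m * v k).
  assert (Vg' : in_V n g') by (intros k Hk; unfold g'; rewrite Vg, (PhiD_V n u), (PhiD_V n v); auto; ring).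
  assert (E1 : ip n g' u = 0).
  { unfold g'. rewrite ip_lin3_l, (ip_root_self n u Hu), (ip_sym n v u). fold c c1.
    unfold l, m. field. lra. }
  assert (E2 : ip n g' v = 0).
  { unfold g'. rewrite ip_lin3_l, (ip_root_self n v Hv). fold c c2.
    unfold l, m. field. lra. }
  assert (E3 : ip n g' g = 0) by (apply H; split; auto).
  assert (E4 : ip n g' g' = 0).
  { unfold g' at 2. rewrite ip_lin3_r. fold g'. rewrite E1, E2, E3; ring. }
  pose proof (ip_zero n g' E4) as Z.
  exists l, m. intros x.
  assert (ip n x g' = 0). { rewrite (ip_ext_r n x g' (fun _ => 0)) by auto. rewrite ip_sym; apply ip_zero_l. }
  unfold g' in H0. rewrite ip_lin3_r in H0. lra.
Qed.

Lemma span_vanish n u v g : span_ip n g u v -> forall x, Hyp n u x -> Hyp n v x -> Hyp n g x.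
Proof. intros [l [m E]] x [Vx Hu] [_ Hv]. split; auto. rewrite E, Hu, Hv; ring. Qed.

Lemma A2_span n b1 b2 g : In b1 (PhiD n) -> In b2 (PhiD n) -> b1 <> b2 ->
  (in_A2 n (PhiD n) b1 b2 g <-> In g (PhiD n) /\ span_ip n g b1 b2).
Proof. intros H1 H2 N. unfold in_A2. split.
  - intros [Hg H]. split; auto. apply vanish_span; auto. apply PhiD_V; auto.
  - intros [Hg S]. split; auto. apply span_vanish; auto. Qed.

Lemma transfer n b1 b2 b g : In b1 (PhiD n) -> In b2 (PhiD n) -> b1 <> b2 ->
  in_A2 n (PhiD n) b1 b2 b -> in_A2 n (PhiD n) b1 b2 g -> b <> g ->
  forall h, in_A2 n (PhiD n) b1 b2 h <-> in_A2 n (PhiD n) b g h.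
Proof. intros H1 H2 N Ab Ag Nbg.
  assert (Hb : In b (PhiD n)) by apply Ab. assert (Hg : In g (PhiD n)) by apply Ag.
  apply (A2_span n b1 b2 b H1 H2 N) in Ab. apply (A2_span n b1 b2 g H1 H2 N) in Ag.
  destruct Ab as [_ [l1 [m1 Eb]]]. destruct Ag as [_ [l2 [m2 Eg]]].
  set (c := ip n b1 b2). assert (Hc : c = -1 \/ c = 0 \/ c = 1) by (apply ip_root_ne; auto).
  set (c' := ip n b g). assert (Hc' : c' = -1 \/ c' = 0 \/ c' = 1) by (apply ip_root_ne; auto).
  assert (bb : ip n b b = l1 * (2 * l1 + c * m1) + m1 * (c * l1 + 2 * m1)).
  { rewrite Eb. rewrite (ip_sym n b b1), (ip_sym n b b2), Eb, Eb, (ip_root_self n b1 H1), (ip_root_self n b2 H2).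
    unfold c. rewrite (ip_sym n b2 b1). ring. }
  assert (gg : ip n g g = l2 * (2 * l2 + c * m2) + m2 * (c * l2 + 2 * m2)).
  { rewrite Eg. rewrite (ip_sym n g b1), (ip_sym n g b2), Eg, Eg, (ip_root_self n b1 H1), (ip_root_self n b2 H2).
    unfold c. rewrite (ip_sym n b2 b1). ring. }
  assert (bg : ip n b g = l1 * (2 * l2 + c * m2) + m1 * (c * l2 + 2 * m2)).
  { rewrite (ip_sym n b g), Eb. rewrite (ip_sym n g b1), (ip_sym n g b2), Eg, Eg, (ip_root_self n b1 H1), (ip_root_self n b2 H2).
    unfold c. rewrite (ip_sym n b2 b1). ring. }
  fold c' in bg.
  set (d := l1 * m2 - l2 * m1).
  assert (Id : ip n b b * ip n g g - c' * c' = d * d * (4 - c * c)) by (rewrite bb, gg, bg; unfold d; ring).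
  rewrite (ip_root_self n b Hb), (ip_root_self n g Hg) in Id.
  assert (Hd : d <> 0).
  { intros E. rewrite E in Id. destruct Hc' as [F|[F|F]]; rewrite F in Id; lra. }
  intros h. unfold in_A2. split; intros [Hh V]; split; auto; intros x X1 X2.
  - apply V.
    + split. apply X1. destruct X1 as [_ X1]; destruct X2 as [_ X2].
      rewrite Eb in X1. rewrite Eg in X2.
      apply Rmult_eq_reg_l with d; auto. unfold d.
      replace ((l1 * m2 - l2 * m1) * ip n x b1) with (m2 * (l1 * ip n x b1 + m1 * ip n x b2) - m1 * (l2 * ip n x b1 + m2 * ip n x b2)) by ring.
      rewrite X1, X2; ring.
    + split. apply X1. destruct X1 as [_ X1]; destruct X2 as [_ X2].
      rewrite Eb in X1. rewrite Eg in X2.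
      apply Rmult_eq_reg_l with d; auto. unfold d.
      replace ((l1 * m2 - l2 * m1) * ip n x b2) with (l1 * (l2 * ip n x b1 + m2 * ip n x b2) - l2 * (l1 * ip n x b1 + m1 * ip n x b2)) by ring.
      rewrite X1, X2; ring.
  - apply V; [split; [apply X1|rewrite Eb]|split; [apply X1|rewrite Eg]];
      destruct X1 as [_ X1]; destruct X2 as [_ X2]; rewrite X1, X2; ring.
Qed.

Open Scope R_scope.

Lemma basic_transfer n b1 b2 b g h : In b1 (PhiD n) -> In b2 (PhiD n) -> b1 <> b2 ->
  in_A2 n (PhiD n) b1 b2 b -> in_A2 n (PhiD n) b1 b2 g -> b <> g -> In h (PhiD n) ->
  (basic n (PhiD n) b1 b2 h <-> basic n (PhiD n) b g h).
Proof. intros H1 H2 N Ab Ag Nbg Hh. pose proof (transfer n b1 b2 b g H1 H2 N Ab Ag Nbg) as T.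
  rewrite !basic_iff by auto. unfold witness. split.
  - intros [A [p [V [Z P]]]]. split. apply T; auto. exists p; repeat split; auto.
    intros k Hk Ak Nk. apply P; auto. apply T; auto.
  - intros [A [p [V [Z P]]]]. split. apply T; auto. exists p; repeat split; auto.
    intros k Hk Ak Nk. apply P; auto. apply T; auto.
Qed.


Lemma plane n u v g : In u (PhiD n) -> In v (PhiD n) -> u <> v -> In g (PhiD n) ->
  g <> u -> g <> v -> span_ip n g u v ->
  (ip n u v = -1 /\ fsum n g u v) \/ (ip n u v = 1 /\ (fsum n u g v \/ fsum n v g u)).
Proof. intros Hu Hv N Hg Nu Nv [l [m E]].
  assert (Hc : ip n u v = -1 \/ ip n u v = 0 \/ ip n u v = 1) by (apply ip_root_ne; auto).
  assert (H1 : ip n u g = -1 \/ ip n u g = 0 \/ ip n u g = 1) by (apply ip_root_ne; auto).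
  assert (H2 : ip n v g = -1 \/ ip n v g = 0 \/ ip n v g = 1) by (apply ip_root_ne; auto).
  assert (E1 : ip n u g = 2 * l + m * ip n u v) by (rewrite E, (ip_root_self n u Hu); ring).
  assert (E2 : ip n v g = l * ip n u v + 2 * m) by (rewrite E, (ip_root_self n v Hv), (ip_sym n v u); ring).
  assert (E3 : 2 = l * ip n u g + m * ip n v g) by (rewrite <- (ip_root_self n g Hg), E, (ip_sym n g u), (ip_sym n g v); ring).
  assert (P : 0 < l * ip n (b0 n) u + m * ip n (b0 n) v) by (rewrite <- E; apply b0_pos; auto).
  pose proof (b0_pos n u Hu). pose proof (b0_pos n v Hv).
  destruct Hc as [C|[C|C]]; rewrite C in *; destruct H1 as [F1|[F1|F1]]; rewrite F1 in *;
    destruct H2 as [F2|[F2|F2]]; rewrite F2 in *; try (exfalso; lra).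
  all: first [ assert (l = 1) by lra | assert (l = -1) by lra | assert (l = 0) by lra ];
       first [ assert (m = 1) by lra | assert (m = -1) by lra | assert (m = 0) by lra ]; subst;
       try (exfalso; lra).
  all: unfold fsum; intros; try (left; split; auto; intros x; rewrite E; ring).
  all: right; split; auto; first [left; intros x; rewrite E; ring | right; intros x; rewrite E; ring].
Qed.

Open Scope R_scope.

Lemma in_A2_span n u v h : In u (PhiD n) -> In v (PhiD n) -> u <> v -> In h (PhiD n) ->
  forall l m, (forall x, ip n x h = l * ip n x u + m * ip n x v) -> in_A2 n (PhiD n) u v h.
Proof. intros Hu Hv N Hh l m E. apply A2_span; auto. split; auto. exists l, m; auto. Qed.

Lemma basic_first n u v : In u (PhiD n) -> In v (PhiD n) -> u <> v ->
  (ip n u v = 0 \/ ip n u v = -1) -> basic n (PhiD n) u v u.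
Proof. intros Hu Hv N Hc. apply basic_iff; auto. split.
  apply (in_A2_span n u v u Hu Hv N Hu 1 0). intros; ring.
  set (c := ip n u v) in *.
  exists (fun k => 1 * v k + (- (c / 2)) * u k). split.
  intros k Hk. rewrite (PhiD_V n u), (PhiD_V n v); auto; ring.
  split. rewrite ip_lin_l, (ip_root_self n u Hu), (ip_sym n v u). fold c. field.
  intros h Hh Ah Nh. rewrite ip_lin_l.
  destruct (classic (h = v)) as [E|E].
  - rewrite E. rewrite (ip_root_self n v Hv). fold c. destruct Hc as [F|F]; rewrite F; lra.
  - apply A2_span in Ah; auto. destruct Ah as [_ S].
    destruct (plane n u v h Hu Hv N Hh Nh E S) as [[C F]|[C F]]; fold c in C.
    + rewrite !F, (ip_root_self n u Hu), (ip_root_self n v Hv), (ip_sym n v u).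
      fold c. rewrite C. lra.
    + exfalso. destruct Hc as [F'|F']; lra.
Qed.

Lemma not_basic_sum n b1 b2 h g d : In h (PhiD n) -> basic n (PhiD n) b1 b2 h -> fsum n h g d ->
  in_A2 n (PhiD n) b1 b2 g -> in_A2 n (PhiD n) b1 b2 d -> g <> h -> d <> h -> False.
Proof. intros Hh B F Ag Ad Ng Nd. apply basic_iff in B; auto. destruct B as [_ [p [V [Z P]]]].
  pose proof (P g (proj1 Ag) Ag Ng). pose proof (P d (proj1 Ad) Ad Nd). rewrite F in Z. lra. Qed.

Lemma fsum_neq n h g d : In d (PhiD n) -> fsum n h g d -> g <> h.
Proof. intros Hd F E. subst. specialize (F d). rewrite (ip_root_self n d Hd) in F.
  rewrite (ip_sym n d h) in F. lra. Qed.

Lemma fsum_neq2 n h g d : In g (PhiD n) -> fsum n h g d -> d <> h.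
Proof. intros Hg F E. subst. specialize (F g). rewrite (ip_root_self n g Hg) in F.
  rewrite (ip_sym n g h) in F. lra. Qed.

Lemma cuts_char n b g : In b (PhiD n) ->
  (cuts n (PhiD n) g b <-> In g (PhiD n) /\ exists d, In d (PhiD n) /\ fsum n b g d).
Proof. intros Hb. split.
  - intros [b1 [b2 [H1 [H2 [NS [Ab [NBb Bg]]]]]]].
    assert (N12 : b1 <> b2) by (intros E; subst; apply NS; intros x; tauto).
    assert (Ag : in_A2 n (PhiD n) b1 b2 g) by apply Bg.
    assert (Hg : In g (PhiD n)) by apply Ag.
    assert (Nbg : b <> g) by (intros E; subst; contradiction).
    rewrite (basic_transfer n b1 b2 b g b H1 H2 N12 Ab Ag Nbg Hb) in NBb.
    rewrite (basic_transfer n b1 b2 b g g H1 H2 N12 Ab Ag Nbg Hg) in Bg.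
    split; auto.
    destruct (ip_root_ne n b g Hb Hg Nbg) as [C|[C|C]].
    + exfalso. apply NBb. apply basic_first; auto.
    + exfalso. apply NBb. apply basic_first; auto.
    + destruct (ip_one_diff n b g Hb Hg C) as [d [Hd [F|F]]]. exists d; auto.
      exfalso. apply (not_basic_sum n b g g b d Hg Bg F).
      apply (in_A2_span n b g b Hb Hg Nbg Hb 1 0); intros; ring.
      apply (in_A2_span n b g d Hb Hg Nbg Hd (-1) 1); intros x; rewrite (F x); ring.
      auto. apply (fsum_neq2 n g b d Hb F).
  - intros [Hg [d [Hd F]]].
    assert (Ngb : g <> b) by (apply (fsum_neq n b g d Hd F)).
    assert (Ndb : d <> b) by (apply (fsum_neq2 n b g d Hg F)).
    assert (C : ip n g d = -1).
    { pose proof (ip_root_self n b Hb) as E. rewrite F in E. rewrite (ip_sym n b g), (ip_sym n b d), !F in E.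
      rewrite (ip_root_self n g Hg), (ip_root_self n d Hd), (ip_sym n d g) in E. lra. }
    assert (Ngd : g <> d) by (intros E; subst; rewrite (ip_root_self n d Hd) in C; lra).
    exists g, d. split; auto. split; auto. split.
    + intros S. set (p := fun k => 1 * d k + (1/2) * g k).
      assert (Hp : Hyp n g p). { split. intros k Hk; unfold p; rewrite (PhiD_V n d), (PhiD_V n g); auto; ring.
        unfold p; rewrite ip_lin_l, (ip_sym n d g), C, (ip_root_self n g Hg); lra. }
      apply S in Hp. destruct Hp as [_ Hp]. unfold p in Hp.
      rewrite ip_lin_l, (ip_root_self n d Hd), C in Hp. lra.
    + split. apply (in_A2_span n g d b Hg Hd Ngd Hb 1 1); intros; rewrite F; ring.
      split. intros B. apply (not_basic_sum n g d b g d Hb B F); auto.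
      apply (in_A2_span n g d g Hg Hd Ngd Hg 1 0); intros; ring.
      apply (in_A2_span n g d d Hg Hd Ngd Hd 0 1); intros; ring.
      apply basic_first; auto.
Qed.

Open Scope R_scope.

Definition SD n b := Dom n (b :: nil) (PhiD n) (fun g => cuts n (PhiD n) g b).
Definition SS n b := samesign n (PhiD n) (fun g => cuts n (PhiD n) g b).

Lemma SD_eq n b : same_set (shard_domain n (PhiD n) b) (SD n b).
Proof. intros x. unfold shard_domain, SD, Dom, Hyp. split.
  - intros [[V Z] H]. split; auto. split. intros z [E|[]]; subst; auto.
    intros g Hg Cg E. apply (H g Hg Cg). split; auto.
  - intros [V [Z H]]. split. split; auto. apply Z; simpl; auto.
    intros g Hg Cg [_ E]. apply (H g Hg Cg E). Qed.

Lemma shard_of_iff n b S : is_shard_of n (PhiD n) b S <->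
  exists x, SD n b x /\ same_set S (closure n (component (SD n b) x)).
Proof. unfold is_shard_of. split.
  - intros [x [Dx E]]. exists x. split. apply SD_eq; auto.
    intros y. rewrite (E y). apply closure_ext. intros z. apply comp_ext, SD_eq.
  - intros [x [Dx E]]. exists x. split. apply SD_eq; auto.
    intros y. rewrite (E y). apply closure_ext. intros z. symmetry. apply comp_ext, SD_eq.
Qed.

Lemma closure_distinct n Z L P x y : Dom n Z L P x -> Dom n Z L P y ->
  same_set (closure n (component (Dom n Z L P) x)) (closure n (component (Dom n Z L P) y)) ->
  samesign n L P x y.
Proof. intros Dx Dy E.
  assert (K : forall u v, Dom n Z L P u -> Dom n Z L P v ->
     (forall w, closure n (component (Dom n Z L P) u) w -> closure n (component (Dom n Z L P) v) w) ->
     forall g, In g L -> P g -> 0 < ip n u g -> 0 < ip n v g).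
  { intros u v Du Dv I g Hg Pg Pu. destruct (Rlt_dec 0 (ip n v g)) as [|Nv]; auto. exfalso.
    assert (Hv : ip n v g < 0) by (destruct Dv as [_ [_ Dv]]; specialize (Dv g Hg Pg); lra).
    assert (Cu : closure n (component (Dom n Z L P) v) u).
    { apply I. apply closure_self. apply Du. apply comp_char. split; auto. split; auto. intros h _ _; tauto. }
    pose proof (closure_ge n (component (Dom n Z L P) v) (fun k => - g k) u) as C.
    rewrite ip_opp_r in C. assert (0 <= - ip n u g); [|lra].
    apply C; auto. intros z Cz. rewrite ip_opp_r. apply comp_char in Cz. destruct Cz as [_ [Dz S]].
    specialize (S g Hg Pg). destruct Dz as [_ [_ Dz]]. specialize (Dz g Hg Pg).
    destruct (Rlt_dec 0 (ip n z g)). apply S in r. lra. lra. }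
  intros g Hg Pg. split; apply K; auto; intros w; apply E.
Qed.

Lemma samesign_trans n L P x y z : samesign n L P x y -> samesign n L P y z -> samesign n L P x z.
Proof. intros A B g Hg Pg. rewrite (A g Hg Pg). auto. Qed.
Lemma samesign_sym n L P x y : samesign n L P x y -> samesign n L P y x.
Proof. intros A g Hg Pg. rewrite (A g Hg Pg). tauto. Qed.

Lemma count_shards {C : Type} n b (codes : list C) (c0 : C) (rep : C -> vec) (sig : vec -> C) :
  NoDup codes ->
  (forall x y, SD n b x -> SD n b y -> SS n b x y -> sig x = sig y) ->
  (forall c, In c codes -> sig (rep c) = c) ->
  (forall x, SD n b x -> In (sig x) codes) ->
  (forall x, SD n b x -> SS n b x (rep (sig x))) ->
  (forall c, In c codes -> SD n b (rep c)) ->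
  num_sets (is_shard_of n (PhiD n) b) (length codes).
Proof. intros ND H1 H2 H3 H4 H5.
  exists (fun k => closure n (component (SD n b) (rep (nth k codes c0)))). split; [|split].
  - intros k Hk. apply shard_of_iff. exists (rep (nth k codes c0)). split. apply H5, nth_In; auto.
    intros y; tauto.
  - intros k l Hk Hl E. apply closure_distinct in E; try (apply H5, nth_In; auto).
    apply H1 in E; try (apply H5, nth_In; auto). rewrite !H2 in E by (apply nth_In; auto).
    eapply NoDup_nth; eauto.
  - intros S HS. apply shard_of_iff in HS. destruct HS as [x [Dx E]].
    destruct (In_nth codes (sig x) c0 (H3 x Dx)) as [k [Hk Ek]]. exists k. split; auto.
    intros y. rewrite (E y). rewrite Ek. apply closure_ext. intros z. unfold SD. rewrite !comp_char.
    fold (SD n b). assert (Dr : SD n b (rep (sig x))) by (apply H5; apply H3; auto).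
    pose proof (H4 x Dx) as Sx. split; intros [A [B Cc]].
    + split; [exact Dr|split; [exact B|]].
      apply (samesign_trans n (PhiD n) _ (rep (sig x)) x z); [apply samesign_sym; exact Sx | exact Cc].
    + split; [exact Dx|split; [exact B|]].
      apply (samesign_trans n (PhiD n) _ x (rep (sig x)) z); [exact Sx | exact Cc].
Qed.

Open Scope R_scope.

Lemma cut_facts n b g : In b (PhiD n) -> cuts n (PhiD n) g b ->
  In g (PhiD n) /\ ip n b g = 1 /\ ip n (b0 n) g < ip n (b0 n) b.
Proof. intros Hb C. apply cuts_char in C; auto. destruct C as [Hg [d [Hd F]]].
  pose proof (fsum_neq n b g d Hd F). pose proof (fsum_neq2 n b g d Hg F).
  pose proof (F b) as Fb. rewrite (ip_root_self n b Hb) in Fb.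
  assert (R1 : ip n b g = -1 \/ ip n b g = 0 \/ ip n b g = 1) by (apply ip_root_ne; auto).
  assert (R2 : ip n b d = -1 \/ ip n b d = 0 \/ ip n b d = 1) by (apply ip_root_ne; auto).
  split; auto. split. lra. rewrite (F (b0 n)). pose proof (b0_pos n d Hd). lra.
Qed.

Ltac ipr2 := repeat first [rewrite ip_minus in * by lia | rewrite ip_plus in * by lia
   | rewrite b0_val in * by lia].

Lemma INR_lt_nat a b : INR a < INR b -> (a < b)%nat.
Proof. apply INR_lt. Qed.

Lemma cut_minus_fwd n i j g : (1 <= i)%nat -> (i < j)%nat -> (j <= n)%nat ->
  cuts n (PhiD n) g (root_minus i j) ->
  exists k, (i < k)%nat /\ (k < j)%nat /\ (g = root_minus k j \/ g = root_minus i k).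
Proof. intros H1 H2 H3 C.
  assert (Hb : In (root_minus i j) (PhiD n)) by (apply In_PhiD; exists i, j; auto).
  destruct (cut_facts n _ g Hb C) as [Hg [E P]]. apply In_PhiD in Hg.
  destruct Hg as [k [l [? [? [? [F|F]]]]]]; subst; ipr2; unfold root_minus, root_plus, vsub, vadd, eps in E;
  eqbsH; subst; try lra.
  all: try lia.
  - exists k. assert (Q : INR i < INR k) by lra. apply INR_lt_nat in Q. split; [auto|split; [lia|left; reflexivity]].
  - exists l. assert (Q : INR l < INR j) by lra. apply INR_lt_nat in Q. split; [lia|split; [lia|right; reflexivity]].
  - exfalso. pose proof (pos_INR i). pose proof (pos_INR k). lra.
  - exfalso. pose proof (pos_INR i). pose proof (pos_INR l). lra.
Qed.

Ltac tcon := first [ lia | (apply INR_lt; lra) | (intro; subst; lra) ].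
Ltac solve_plus :=
  match goal with v : nat |- exists _, _ => exists v; split; [lia|];
    first [ left; split; [tcon|split; [tcon|reflexivity]]
          | right; left; split; [tcon|reflexivity]
          | right; right; left; split; [tcon|reflexivity]
          | right; right; right; left; split; [tcon|reflexivity]
          | right; right; right; right; split; [split; tcon|reflexivity] ]
  end.

Lemma cut_plus_fwd n i j g : (1 <= i)%nat -> (i < j)%nat -> (j <= n)%nat ->
  cuts n (PhiD n) g (root_plus i j) ->
  exists k, (1 <= k)%nat /\
   ((k < j /\ k <> i /\ g = root_minus k j) \/ (k < i /\ g = root_minus k i) \/
    (k < i /\ g = root_plus k j) \/ (k < i /\ g = root_plus k i) \/ (i < k < j /\ g = root_plus i k))%nat.
Proof. intros H1 H2 H3 C.
  assert (Hb : In (root_plus i j) (PhiD n)) by (apply In_PhiD; exists i, j; auto).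
  destruct (cut_facts n _ g Hb C) as [Hg [E P]]. apply In_PhiD in Hg.
  destruct Hg as [k [l [? [? [? [F|F]]]]]]; subst; ipr2; unfold root_minus, root_plus, vsub, vadd, eps in E;
  eqbsH; subst; try lra; try lia.
  all: try solve_plus.
  exfalso. pose proof (lt_INR i j ltac:(lia)). pose proof (lt_INR j l ltac:(lia)). lra.
Qed.

Ltac inphi := apply In_PhiD; first
  [ refine (ex_intro _ _ (ex_intro _ _ (conj _ (conj _ (conj _ (or_introl eq_refl)))))); lia
  | refine (ex_intro _ _ (ex_intro _ _ (conj _ (conj _ (conj _ (or_intror eq_refl)))))); lia ].
Ltac mkcut d := apply cuts_char; [inphi|]; split; [inphi|]; exists d; split; [inphi|];
  intros x; ipr2; ring.

Lemma cut_minus_bwd n i j k : (1 <= i)%nat -> (i < k)%nat -> (k < j)%nat -> (j <= n)%nat ->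
  cuts n (PhiD n) (root_minus k j) (root_minus i j) /\ cuts n (PhiD n) (root_minus i k) (root_minus i j).
Proof. intros. split. mkcut (root_minus i k). mkcut (root_minus k j). Qed.

Lemma cut_plus_bwd n i j k : (1 <= i)%nat -> (i < j)%nat -> (j <= n)%nat -> (1 <= k)%nat ->
  ((k < j /\ k <> i)%nat -> cuts n (PhiD n) (root_minus k j) (root_plus i j)) /\
  ((k < i)%nat -> cuts n (PhiD n) (root_minus k i) (root_plus i j)) /\
  ((k < i)%nat -> cuts n (PhiD n) (root_plus k j) (root_plus i j)) /\
  ((k < i)%nat -> cuts n (PhiD n) (root_plus k i) (root_plus i j)) /\
  ((i < k < j)%nat -> cuts n (PhiD n) (root_plus i k) (root_plus i j)).
Proof. intros. split; [|split; [|split; [|split]]]; intros.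
  - destruct (Nat.lt_ge_cases k i). mkcut (root_plus k i). mkcut (root_plus i k).
  - mkcut (root_plus k j).
  - mkcut (root_minus k i).
  - mkcut (root_minus k j).
  - mkcut (root_minus k j).
Qed.

Open Scope R_scope.

Fixpoint allb (m : nat) : list (list bool) :=
  match m with O => nil :: nil | S m => map (cons true) (allb m) ++ map (cons false) (allb m) end.

Lemma allb_len m : length (allb m) = (2 ^ m)%nat.
Proof. induction m; simpl; auto. rewrite length_app, !length_map, IHm. lia. Qed.

Lemma allb_in m l : In l (allb m) <-> length l = m.
Proof. revert l; induction m; intros l; simpl.
  - split. intros [E|[]]; subst; auto. intros E; destruct l; simpl in *; auto; lia.
  - rewrite in_app_iff, !in_map_iff. split.
    + intros [[x [E H]]|[x [E H]]]; subst; simpl; f_equal; apply IHm; auto.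
    + intros E. destruct l as [|[|] l]; simpl in E; try lia.
      left; exists l; split; auto; apply IHm; lia.
      right; exists l; split; auto; apply IHm; lia.
Qed.

Lemma allb_nodup m : NoDup (allb m).
Proof. induction m; simpl. constructor. intros []. constructor.
  apply NoDup_app. apply FinFun.Injective_map_NoDup; auto. intros a b E; injection E; auto.
  apply FinFun.Injective_map_NoDup; auto. intros a b E; injection E; auto.
  intros l H1 H2. apply in_map_iff in H1. apply in_map_iff in H2.
  destruct H1 as [a [E1 _]]; destruct H2 as [c [E2 _]]. subst. discriminate.
Qed.

Definition gtb (a b : R) : bool := if Rlt_dec b a then true else false.

Lemma gtb_true a b : gtb a b = true <-> b < a.
Proof. unfold gtb. destruct (Rlt_dec b a); split; intros; auto; discriminate || contradiction. Qed.

Lemma gtb_iff a b c d : (b < a <-> d < c) -> gtb a b = gtb c d.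
Proof. intros H. unfold gtb. destruct (Rlt_dec b a), (Rlt_dec d c); auto; exfalso; tauto. Qed.

Lemma nth_map_seq {A : Type} (f : nat -> A) a L m d : (m < L)%nat -> nth m (map f (seq a L)) d = f (a + m)%nat.
Proof. revert a m; induction L; intros a m H. lia. simpl. destruct m. f_equal; lia.
  rewrite IHL by lia. f_equal; lia. Qed.

Lemma map_nth_seq {A : Type} (l : list A) a d : map (fun k => nth (k - a) l d) (seq a (length l)) = l.
Proof. revert a; induction l; intros a0; simpl; auto. rewrite Nat.sub_diag. f_equal.
  rewrite <- seq_shift, map_map. rewrite <- (IHl a0) at 2. apply map_ext_in. intros k Hk.
  apply in_seq in Hk. replace (S k - a0)%nat with (S (k - a0)) by lia. auto. Qed.

Lemma SD_facts n b x : SD n b x -> in_V n x /\ ip n x b = 0 /\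
  forall g, In g (PhiD n) -> cuts n (PhiD n) g b -> ip n x g <> 0.
Proof. intros [V [Z C]]. split; auto. split; auto. apply Z; simpl; auto. Qed.

Lemma SD_intro n b x : in_V n x -> ip n x b = 0 ->
  (forall g, In g (PhiD n) -> cuts n (PhiD n) g b -> ip n x g <> 0) -> SD n b x.
Proof. intros V Z C. split; auto. split; auto. intros z [E|[]]; subst; auto. Qed.

Open Scope R_scope.

Definition sigM (i j : nat) (x : vec) : list bool :=
  map (fun k => gtb (x k) (x i)) (seq (S i) (j - i - 1)).
Definition repM (i j : nat) (s : list bool) : vec :=
  fun k => if andb (Nat.ltb i k) (Nat.ltb k j) then (if nth (k - S i) s false then 1 else -1) else 0.

Lemma repM_in i j s k : (i < k < j)%nat -> repM i j s k = if nth (k - S i) s false then 1 else -1.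
Proof. intros. unfold repM. destruct (Nat.ltb_spec i k), (Nat.ltb_spec k j); simpl; auto; lia. Qed.
Lemma repM_out i j s k : ~ (i < k < j)%nat -> repM i j s k = 0.
Proof. intros. unfold repM. destruct (Nat.ltb_spec i k), (Nat.ltb_spec k j); simpl; auto; lia. Qed.

Lemma sigM_nth i j x k : (i < k < j)%nat -> nth (k - S i) (sigM i j x) false = gtb (x k) (x i).
Proof. intros. unfold sigM. rewrite nth_map_seq by lia. f_equal. f_equal. lia. Qed.

Lemma shards_minus n i j : (1 <= i)%nat -> (i < j)%nat -> (j <= n)%nat ->
  num_sets (is_shard_of n (PhiD n) (root_minus i j)) (2 ^ (j - i - 1))%nat.
Proof. intros H1 H2 H3. rewrite <- allb_len.
  set (b := root_minus i j).
  assert (Hb : In b (PhiD n)) by (apply In_PhiD; exists i, j; auto).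
  assert (Xb : forall x, SD n b x -> x j = x i).
  { intros x Dx. apply SD_facts in Dx. destruct Dx as [_ [Z _]]. unfold b in Z. rewrite ip_minus in Z by lia. lra. }
  assert (Xc : forall x k, SD n b x -> (i < k < j)%nat -> x k - x i <> 0).
  { intros x k Dx Hk. apply SD_facts in Dx. destruct Dx as [_ [_ C]].
    assert (Ck := proj2 (cut_minus_bwd n i j k H1 (proj1 Hk) (proj2 Hk) H3)).
    specialize (C _ (proj1 (cut_facts n _ _ Hb Ck)) Ck). rewrite ip_minus in C by lia. auto. }
  apply (count_shards n b (allb (j - i - 1)) nil (repM i j) (sigM i j)).
  - apply allb_nodup.
  - intros x y Dx Dy S. unfold sigM. apply map_ext_in. intros k Hk. apply in_seq in Hk.
    apply gtb_iff. assert (Ck := proj2 (cut_minus_bwd n i j k H1 ltac:(lia) ltac:(lia) H3)).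
    specialize (S _ (proj1 (cut_facts n _ _ Hb Ck)) Ck). rewrite !ip_minus in S by lia.
    split; intros; [apply Rlt_0_minus in H; apply S in H|apply Rlt_0_minus in H; apply S in H]; lra.
  - intros c Hc. apply allb_in in Hc. unfold sigM.
    rewrite (repM_out i j c i) by lia.
    transitivity (map (fun k => nth (k - S i) c false) (seq (S i) (length c))); [|apply map_nth_seq].
    rewrite Hc. apply map_ext_in. intros k Hk. apply in_seq in Hk. rewrite repM_in by lia.
    destruct (nth (k - S i) c false); unfold gtb; destruct (Rlt_dec 0 _); auto; lra.
  - intros x Dx. apply allb_in. unfold sigM. rewrite length_map, length_seq. auto.
  - intros x Dx g Hg Cg. destruct (cut_minus_fwd n i j g H1 H2 H3 Cg) as [k [Hk1 [Hk2 E]]].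
    pose proof (Xc x k Dx (conj Hk1 Hk2)) as Nk. pose proof (Xb x Dx) as Ej.
    assert (G : gtb (x k) (x i) = true /\ x i < x k \/ gtb (x k) (x i) = false /\ x k < x i).
    { unfold gtb. destruct (Rlt_dec (x i) (x k)). left; auto. right; split; auto; lra. }
    destruct E as [E|E]; subst g; rewrite !ip_minus by lia.
    + rewrite (repM_out i j _ j), repM_in, sigM_nth by lia.
      destruct G as [[G L]|[G L]]; rewrite G; split; intros; lra.
    + rewrite (repM_out i j _ i), repM_in, sigM_nth by lia.
      destruct G as [[G L]|[G L]]; rewrite G; split; intros; lra.
  - intros c Hc. apply SD_intro.
    + intros k Hk. apply repM_out. lia.
    + unfold b. rewrite ip_minus, repM_out, repM_out by lia. ring.
    + intros g Hg Cg. destruct (cut_minus_fwd n i j g H1 H2 H3 Cg) as [k [Hk1 [Hk2 [E|E]]]]; subst g;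
      rewrite !ip_minus by lia; rewrite ?(repM_out i j _ j), ?(repM_out i j _ i), ?repM_in by lia;
      destruct (nth _ c false); lra.
Qed.

Open Scope R_scope.

Definition FF := (false, false). Definition FT := (false, true).
Definition TF := (true, false). Definition TT := (true, true).

Fixpoint Aw (m : nat) : list (list (bool * bool)) :=
  match m with O => nil :: nil | S m => map (cons FF) (Aw m) ++ map (cons FT) (Aw m) ++ map (cons TT) (Aw m) end.
Fixpoint Aw' (m : nat) : list (list (bool * bool)) :=
  match m with O => nil :: nil | S m => map (cons FF) (Aw' m) ++ map (cons TF) (Aw' m) ++ map (cons TT) (Aw' m) end.
Fixpoint Bw (m : nat) : list (list (bool * bool)) :=
  match m with O => nil | S m => map (cons FF) (Bw m) ++ map (cons TT) (Bw m) ++ map (cons TF) (Aw' m) end.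

Lemma Aw_len m : length (Aw m) = (3 ^ m)%nat.
Proof. induction m; simpl; auto. rewrite !length_app, !length_map, IHm. lia. Qed.
Lemma Aw'_len m : length (Aw' m) = (3 ^ m)%nat.
Proof. induction m; simpl; auto. rewrite !length_app, !length_map, IHm. lia. Qed.
Lemma Bw_len m : (length (Bw m) + 2 ^ m = 3 ^ m)%nat.
Proof. induction m; simpl; auto. rewrite !length_app, !length_map, Aw'_len. lia. Qed.

Lemma letter_cases (a : bool * bool) : a = FF \/ a = FT \/ a = TF \/ a = TT.
Proof. destruct a as [[|] [|]]; unfold FF, FT, TF, TT; auto. Qed.

Lemma Aw_in m w : In w (Aw m) <-> length w = m /\ ~ In TF w.
Proof. revert w; induction m; intros w; simpl.
  - split. intros [E|[]]; subst; simpl; auto. intros [E _]; destruct w; simpl in *; auto; lia.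
  - rewrite !in_app_iff, !in_map_iff. split.
    + intros [[x [E H]]|[[x [E H]]|[x [E H]]]]; subst; simpl; apply IHm in H; destruct H as [L N];
        split; try (f_equal; auto); intros [F|F]; try discriminate; auto.
    + intros [E N]. destruct w as [|a w]; simpl in E; try lia.
      assert (Hw : In w (Aw m)) by (apply IHm; split; [lia|]; intros F; apply N; simpl; auto).
      destruct (letter_cases a) as [F|[F|[F|F]]]; subst.
      left; eauto. right; left; eauto. exfalso; apply N; simpl; auto. right; right; eauto.
Qed.

Lemma Aw'_in m w : In w (Aw' m) <-> length w = m /\ ~ In FT w.
Proof. revert w; induction m; intros w; simpl.
  - split. intros [E|[]]; subst; simpl; auto. intros [E _]; destruct w; simpl in *; auto; lia.
  - rewrite !in_app_iff, !in_map_iff. split.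
    + intros [[x [E H]]|[[x [E H]]|[x [E H]]]]; subst; simpl; apply IHm in H; destruct H as [L N];
        split; try (f_equal; auto); intros [F|F]; try discriminate; auto.
    + intros [E N]. destruct w as [|a w]; simpl in E; try lia.
      assert (Hw : In w (Aw' m)) by (apply IHm; split; [lia|]; intros F; apply N; simpl; auto).
      destruct (letter_cases a) as [F|[F|[F|F]]]; subst.
      left; eauto. exfalso; apply N; simpl; auto. right; left; eauto. right; right; eauto.
Qed.

Lemma Bw_in m w : In w (Bw m) <-> length w = m /\ ~ In FT w /\ In TF w.
Proof. revert w; induction m; intros w; simpl.
  - split. intros []. intros [E [_ H]]. destruct w; simpl in *; auto; lia.
  - rewrite !in_app_iff, !in_map_iff. split.
    + intros [[x [E H]]|[[x [E H]]|[x [E H]]]]; subst; simpl.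
      * apply IHm in H; destruct H as [L [N T]]. split; [f_equal; auto|split; auto].
        intros [F|F]; try discriminate; auto.
      * apply IHm in H; destruct H as [L [N T]]. split; [f_equal; auto|split; auto].
        intros [F|F]; try discriminate; auto.
      * apply Aw'_in in H; destruct H as [L N]. split; [f_equal; auto|split; auto].
        intros [F|F]; try discriminate; auto.
    + intros [E [N T]]. destruct w as [|a w]; simpl in E; try lia.
      destruct (letter_cases a) as [F|[F|[F|F]]]; subst.
      * left. exists w; split; auto. apply IHm. split; [lia|split].
        intros F; apply N; simpl; auto. destruct T as [T|T]; auto; discriminate.
      * exfalso; apply N; simpl; auto.
      * right; right. exists w; split; auto. apply Aw'_in. split; [lia|]. intros F; apply N; simpl; auto.
      * right; left. exists w; split; auto. apply IHm. split; [lia|split].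
        intros F; apply N; simpl; auto. destruct T as [T|T]; auto; discriminate.
Qed.

Lemma map_cons_nodup {A : Type} (a : A) l : NoDup l -> NoDup (map (cons a) l).
Proof. intros H. apply FinFun.Injective_map_NoDup; auto. intros x y E; injection E; auto. Qed.

Lemma disj_cons {A : Type} (a b : A) l l' : a <> b -> forall x, In x (map (cons a) l) -> ~ In x (map (cons b) l').
Proof. intros N x K1 K2. apply in_map_iff in K1. apply in_map_iff in K2. destruct K1 as [u [E1 _]]; destruct K2 as [v [E2 _]].
  subst. injection E2; intros; subst; auto. Qed.

Lemma nodup3 {A : Type} (a b c : A) l1 l2 l3 : a <> b -> a <> c -> b <> c -> NoDup l1 -> NoDup l2 -> NoDup l3 ->
  NoDup (map (cons a) l1 ++ map (cons b) l2 ++ map (cons c) l3).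
Proof. intros Nab Nac Nbc D1 D2 D3. apply NoDup_app. apply map_cons_nodup; auto. apply NoDup_app; try apply map_cons_nodup; auto.
  intros x K1 K2. eapply disj_cons. 2: exact K1. exact Nbc. exact K2.
  intros x K1 K2. apply in_app_iff in K2. destruct K2 as [K2|K2].
  eapply disj_cons. 2: exact K1. exact Nab. exact K2.
  eapply disj_cons. 2: exact K1. exact Nac. exact K2.
Qed.

Lemma Aw_nodup m : NoDup (Aw m).
Proof. induction m; simpl. constructor. intros []. constructor. apply nodup3; auto; discriminate. Qed.
Lemma Aw'_nodup m : NoDup (Aw' m).
Proof. induction m; simpl. constructor. intros []. constructor. apply nodup3; auto; discriminate. Qed.
Lemma Bw_nodup m : NoDup (Bw m).
Proof. induction m; simpl. constructor. apply nodup3; auto using Aw'_nodup; discriminate. Qed.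

Lemma Cw_nodup m : NoDup (Aw m ++ Bw m).
Proof. apply NoDup_app; auto using Aw_nodup, Bw_nodup. intros w H1 H2.
  apply Aw_in in H1. apply Bw_in in H2. tauto. Qed.

Lemma Cw_in m w : In w (Aw m ++ Bw m) <-> length w = m /\ ~ (In FT w /\ In TF w).
Proof. rewrite in_app_iff, Aw_in, Bw_in. split.
  - intros [[L N]|[L [N T]]]; split; tauto.
  - intros [L N]. destruct (classic (In TF w)); [right|left]; tauto. Qed.

Lemma Cw_len m : (length (Aw m ++ Bw m) = 2 * 3 ^ m - 2 ^ m)%nat.
Proof. rewrite length_app, Aw_len. pose proof (Bw_len m). lia. Qed.

Open Scope R_scope.

Definition hasTF (w : list (bool * bool)) : bool := existsb (fun a => andb (fst a) (negb (snd a))) w.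
Lemma hasTF_true w : hasTF w = true <-> In TF w.
Proof. unfold hasTF. rewrite existsb_exists. split.
  - intros [[[|] [|]] [H E]]; simpl in E; try discriminate; auto.
  - intros H. exists TF; split; auto. Qed.

Definition tP (w : list (bool * bool)) : R := if hasTF w then -1 else 1.
Definition lval (a : bool * bool) : R :=
  if fst a then (if snd a then 2 else 0) else (if snd a then 0 else -2).

Definition compat (a : bool * bool) (t : R) :=
  (t = 1 \/ t = -1) /\ (a = FT -> t = 1) /\ (a = TF -> t = -1).

Lemma gtb_false a b : gtb a b = false <-> ~ b < a.
Proof. unfold gtb. destruct (Rlt_dec b a); split; intros; auto; try discriminate; contradiction. Qed.

Lemma letter_ok a t : compat a t -> (gtb (lval a) t, gtb (lval a) (- t)) = a.
Proof. intros [T [F1 F2]]. destruct a as [[|] [|]]; unfold lval; simpl.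
  - f_equal; apply gtb_true; lra.
  - specialize (F2 eq_refl). subst. f_equal; [apply gtb_true|apply gtb_false]; lra.
  - specialize (F1 eq_refl). subst. f_equal; [apply gtb_false|apply gtb_true]; lra.
  - f_equal; apply gtb_false; lra.
Qed.

Lemma lval_ne a t : (t = 1 \/ t = -1) -> lval a - t <> 0 /\ lval a + t <> 0.
Proof. intros T. destruct a as [[|] [|]]; unfold lval; simpl; lra. Qed.

Lemma letter_sign xk t t' : xk - t <> 0 -> xk + t <> 0 -> compat (gtb xk t, gtb xk (- t)) t' ->
  (0 < xk - t <-> 0 < lval (gtb xk t, gtb xk (- t)) - t') /\
  (0 < xk + t <-> 0 < lval (gtb xk t, gtb xk (- t)) + t').
Proof. intros N1 N2 [T [F1 F2]]. unfold gtb in *.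
  destruct (Rlt_dec t xk), (Rlt_dec (- t) xk); unfold lval in *; simpl in *;
  try (specialize (F1 eq_refl)); try (specialize (F2 eq_refl)); split; split; intros; lra.
Qed.

Lemma nodup_prod {A B : Type} (l1 : list A) (l2 : list B) : NoDup l1 -> NoDup l2 -> NoDup (list_prod l1 l2).
Proof. intros D1 D2. induction D1; simpl. constructor.
  apply NoDup_app; auto. apply FinFun.Injective_map_NoDup; auto. intros u v E; injection E; auto.
  intros p K1 K2. apply in_map_iff in K1. destruct K1 as [y [E _]]. subst.
  apply in_prod_iff in K2. tauto. Qed.

Open Scope R_scope.

Definition repP (i j : nat) (c : list bool * list (bool * bool)) : vec :=
  fun k => if Nat.eqb k j then tP (snd c) else if Nat.eqb k i then - tP (snd c)
   else if andb (Nat.ltb i k) (Nat.ltb k j) then tP (snd c) + (if nth (k - S i) (fst c) false then 1 else -1)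
   else if andb (Nat.leb 1 k) (Nat.ltb k i) then lval (nth (k - 1) (snd c) FF) else 0.

Definition sigP (i j : nat) (x : vec) : list bool * list (bool * bool) :=
  (map (fun k => gtb (x k) (x j)) (seq (S i) (j - i - 1)),
   map (fun k => (gtb (x k) (x j), gtb (x k) (- x j))) (seq 1 (i - 1))).

Ltac nats := repeat match goal with
  | |- context [Nat.eqb ?a ?b] => destruct (Nat.eqb_spec a b)
  | |- context [Nat.ltb ?a ?b] => destruct (Nat.ltb_spec a b)
  | |- context [Nat.leb ?a ?b] => destruct (Nat.leb_spec a b) end;
  simpl; try lia; auto.

Lemma repP_j i j c : (i < j)%nat -> repP i j c j = tP (snd c).
Proof. intros. unfold repP. nats. Qed.
Lemma repP_i i j c : (i < j)%nat -> repP i j c i = - tP (snd c).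
Proof. intros. unfold repP. nats. Qed.
Lemma repP_mid i j c k : (i < k < j)%nat -> repP i j c k = tP (snd c) + (if nth (k - S i) (fst c) false then 1 else -1).
Proof. intros. unfold repP. nats. Qed.
Lemma repP_low i j c k : (1 <= k < i)%nat -> (i < j)%nat -> repP i j c k = lval (nth (k - 1) (snd c) FF).
Proof. intros. unfold repP. nats. Qed.
Lemma repP_out i j c k : (1 <= i)%nat -> (i < j)%nat -> (k = 0 \/ j < k)%nat -> repP i j c k = 0.
Proof. intros. unfold repP. nats. Qed.

Lemma sigP_mid i j x k : (i < k < j)%nat -> nth (k - S i) (fst (sigP i j x)) false = gtb (x k) (x j).
Proof. intros. unfold sigP; simpl. rewrite nth_map_seq by lia. f_equal. f_equal. lia. Qed.
Lemma sigP_low i j x k : (1 <= k < i)%nat -> nth (k - 1) (snd (sigP i j x)) FF = (gtb (x k) (x j), gtb (x k) (- x j)).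
Proof. intros. unfold sigP; simpl. rewrite nth_map_seq by lia. replace (1 + (k - 1))%nat with k by lia. auto. Qed.

Lemma tP_val w : tP w = 1 \/ tP w = -1.
Proof. unfold tP. destruct (hasTF w); auto. Qed.

Lemma compat_Cw m w a : In w (Aw m ++ Bw m) -> In a w -> compat a (tP w).
Proof. intros Hw Ha. split. apply tP_val. apply Cw_in in Hw. destruct Hw as [_ N]. unfold tP. split; intros E; subst.
  - destruct (hasTF w) eqn:H; auto. apply hasTF_true in H. tauto.
  - destruct (hasTF w) eqn:H; auto. apply Bool.not_true_iff_false in H. exfalso; apply H, hasTF_true; auto.
Qed.

Lemma iff_neg a b : (0 < a <-> 0 < b) -> a <> 0 -> b <> 0 -> (0 < - a <-> 0 < - b).
Proof. intros H A B. destruct (Rlt_dec 0 a) as [P|P]; destruct (Rlt_dec 0 b) as [Q|Q]; split; intros; try lra; tauto. Qed.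

Lemma shards_plus_raw n i j : (1 <= i)%nat -> (i < j)%nat -> (j <= n)%nat ->
  num_sets (is_shard_of n (PhiD n) (root_plus i j)) (2 ^ (j - i - 1) * (2 * 3 ^ (i - 1) - 2 ^ (i - 1)))%nat.
Proof. intros H1 H2 H3. rewrite <- allb_len, <- Cw_len, <- length_prod.
  set (b := root_plus i j).
  assert (Hb : In b (PhiD n)) by (apply In_PhiD; exists i, j; auto).
  pose proof (cut_plus_bwd n i j) as CB.
  assert (cutin : forall g, cuts n (PhiD n) g b -> In g (PhiD n)) by (intros g C; apply (cut_facts n _ _ Hb C)).
  assert (Xb : forall x, SD n b x -> x i = - x j).
  { intros x Dx. apply SD_facts in Dx. destruct Dx as [_ [Z _]]. unfold b in Z. rewrite ip_plus in Z by lia. lra. }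
  assert (Nc : forall x g, SD n b x -> cuts n (PhiD n) g b -> ip n x g <> 0).
  { intros x g Dx C. apply SD_facts in Dx. apply Dx; auto. }
  assert (N5 : forall x k, SD n b x -> (i < k < j)%nat -> x k - x j <> 0).
  { intros x k Dx Hk. assert (C := proj2 (proj2 (proj2 (proj2 (CB k H1 H2 H3 ltac:(lia))))) Hk).
    pose proof (Nc x _ Dx C). rewrite ip_plus in H by lia. rewrite (Xb x Dx) in H. lra. }
  assert (N4 : forall x k, SD n b x -> (1 <= k < i)%nat -> x k - x j <> 0).
  { intros x k Dx Hk. assert (C := proj1 (proj2 (proj2 (proj2 (CB k H1 H2 H3 ltac:(lia))))) ltac:(lia)).
    pose proof (Nc x _ Dx C). rewrite ip_plus in H by lia. rewrite (Xb x Dx) in H. lra. }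
  assert (N3 : forall x k, SD n b x -> (1 <= k < i)%nat -> x k + x j <> 0).
  { intros x k Dx Hk. assert (C := proj1 (proj2 (proj2 (CB k H1 H2 H3 ltac:(lia)))) ltac:(lia)).
    pose proof (Nc x _ Dx C). rewrite ip_plus in H by lia. lra. }
  assert (Dsig : forall x, SD n b x -> In (sigP i j x) (list_prod (allb (j - i - 1)) (Aw (i - 1) ++ Bw (i - 1)))).
  { intros x Dx. apply in_prod_iff. split.
    - apply allb_in. unfold sigP; simpl. rewrite length_map, length_seq; auto.
    - apply Cw_in. unfold sigP; simpl. split. rewrite length_map, length_seq; auto.
      intros [K1 K2]. apply in_map_iff in K1. apply in_map_iff in K2.
      destruct K1 as [k [E1 Hk]]. destruct K2 as [k' [E2 Hk']]. apply in_seq in Hk. apply in_seq in Hk'.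
      unfold FT in E1; unfold TF in E2. injection E1; injection E2; intros A1 A2 A3 A4.
      apply gtb_false in A4. apply gtb_true in A3. apply gtb_true in A2. apply gtb_false in A1.
      pose proof (N4 x k Dx ltac:(lia)). lra. }
  apply (count_shards n b _ (nil, nil) (repP i j) (sigP i j)).
  - apply nodup_prod. apply allb_nodup. apply Cw_nodup.
  - intros x y Dx Dy S. unfold sigP. f_equal; apply map_ext_in; intros k Hk; apply in_seq in Hk.
    + apply gtb_iff. assert (C := proj2 (proj2 (proj2 (proj2 (CB k H1 H2 H3 ltac:(lia))))) ltac:(lia)).
      specialize (S _ (cutin _ C) C). rewrite !ip_plus in S by lia. rewrite (Xb x Dx), (Xb y Dy) in S.
      split; intros Q; [assert (0 < x k + - x j) by lra|assert (0 < y k + - y j) by lra]; [apply S in H|apply S in H]; lra.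
    + f_equal; apply gtb_iff.
      * assert (C := proj1 (proj2 (proj2 (proj2 (CB k H1 H2 H3 ltac:(lia))))) ltac:(lia)).
        specialize (S _ (cutin _ C) C). rewrite !ip_plus in S by lia. rewrite (Xb x Dx), (Xb y Dy) in S.
        split; intros Q; [assert (0 < - x j + x k) by lra|assert (0 < - y j + y k) by lra]; [apply S in H|apply S in H]; lra.
      * assert (C := proj1 (proj2 (proj2 (CB k H1 H2 H3 ltac:(lia)))) ltac:(lia)).
        specialize (S _ (cutin _ C) C). rewrite !ip_plus in S by lia.
        split; intros Q; [assert (0 < x j + x k) by lra|assert (0 < y j + y k) by lra]; [apply S in H|apply S in H]; lra.
  - intros [s w] Hc. apply in_prod_iff in Hc. destruct Hc as [Hs Hw]. apply allb_in in Hs.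
    unfold sigP. rewrite repP_j by lia. simpl. f_equal.
    + transitivity (map (fun k => nth (k - S i) s false) (seq (S i) (length s))); [|apply map_nth_seq].
      rewrite Hs. apply map_ext_in. intros k Hk. apply in_seq in Hk. rewrite repP_mid by lia. simpl.
      destruct (nth (k - S i) s false); [apply gtb_true|apply gtb_false]; lra.
    + assert (Lw : length w = (i - 1)%nat) by (apply Cw_in in Hw; apply Hw).
      transitivity (map (fun k => nth (k - 1) w FF) (seq 1 (length w))); [|apply map_nth_seq].
      rewrite Lw. apply map_ext_in. intros k Hk. apply in_seq in Hk. rewrite repP_low by lia. simpl.
      apply letter_ok. apply (compat_Cw (i - 1)); auto. apply nth_In. lia.
  - apply Dsig.
  - intros x Dx g Hg Cg. pose proof (Dsig x Dx) as Ds. apply in_prod_iff in Ds. destruct Ds as [_ Dw].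
    set (t' := tP (snd (sigP i j x))).
    assert (LS : forall k, (1 <= k < i)%nat ->
      (0 < x k - x j <-> 0 < repP i j (sigP i j x) k - t') /\ (0 < x k + x j <-> 0 < repP i j (sigP i j x) k + t')).
    { intros k Hk. rewrite repP_low, sigP_low by lia. apply letter_sign. apply N4; auto. apply N3; auto.
      rewrite <- (sigP_low i j x k) by lia. apply (compat_Cw (i - 1)); auto. apply nth_In.
      unfold sigP; simpl; rewrite length_map, length_seq; lia. }
    assert (MS : forall k, (i < k < j)%nat -> (0 < x k - x j <-> 0 < repP i j (sigP i j x) k - t')).
    { intros k Hk. rewrite repP_mid, sigP_mid by lia. fold t'. pose proof (N5 x k Dx Hk).
      unfold gtb. destruct (Rlt_dec (x j) (x k)); split; intros; lra. }
    pose proof (Xb x Dx) as Xi.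
    assert (Rj : repP i j (sigP i j x) j = t') by (apply repP_j; lia).
    assert (Ri : repP i j (sigP i j x) i = - t') by (apply repP_i; lia).
    assert (T' : t' = 1 \/ t' = -1) by apply tP_val.
    destruct (cut_plus_fwd n i j g H1 H2 H3 Cg) as [k [Hk1 [[Hk [Hki E]]|[[Hk E]|[[Hk E]|[[Hk E]|[Hk E]]]]]]];
      subst g; first [rewrite !ip_plus by lia | rewrite !ip_minus by lia]; rewrite ?Rj, ?Ri, ?Xi.
    + destruct (Nat.lt_ge_cases k i) as [L|L].
      * pose proof (proj1 (LS k (conj Hk1 L))). pose proof (N4 x k Dx (conj Hk1 L)).
        pose proof (lval_ne (nth (k - 1) (snd (sigP i j x)) FF) t' T').
        rewrite repP_low in * by lia.
        replace (x j - x k) with (- (x k - x j)) by ring. replace (t' - lval (nth (k - 1) (snd (sigP i j x)) FF)) with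
          (- (lval (nth (k - 1) (snd (sigP i j x)) FF) - t')) by ring.
        apply iff_neg; tauto.
      * assert (Hm : (i < k < j)%nat) by lia. pose proof (MS k Hm). pose proof (N5 x k Dx Hm).
        rewrite repP_mid in * by lia. replace (x j - x k) with (- (x k - x j)) by ring.
        replace (t' - (tP (snd (sigP i j x)) + (if nth (k - S i) (fst (sigP i j x)) false then 1 else -1)))
          with (- (tP (snd (sigP i j x)) + (if nth (k - S i) (fst (sigP i j x)) false then 1 else -1) - t')) by ring.
        apply iff_neg; auto. fold t'. destruct (nth _ _ _); lra.
    + pose proof (proj2 (LS k (conj Hk1 Hk))). pose proof (N3 x k Dx (conj Hk1 Hk)).
      pose proof (lval_ne (nth (k - 1) (snd (sigP i j x)) FF) t' T').
      rewrite repP_low in * by lia.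
      replace (- x j - x k) with (- (x k + x j)) by ring.
      replace (- t' - lval (nth (k - 1) (snd (sigP i j x)) FF)) with (- (lval (nth (k - 1) (snd (sigP i j x)) FF) + t')) by ring.
      apply iff_neg; tauto.
    + pose proof (proj2 (LS k (conj Hk1 Hk))). rewrite repP_low in * by lia.
      replace (x j + x k) with (x k + x j) by ring. replace (t' + lval (nth (k - 1) (snd (sigP i j x)) FF)) with (lval (nth (k - 1) (snd (sigP i j x)) FF) + t') by ring. tauto.
    + pose proof (proj1 (LS k (conj Hk1 Hk))). rewrite repP_low in * by lia.
      replace (- x j + x k) with (x k - x j) by ring. replace (- t' + lval (nth (k - 1) (snd (sigP i j x)) FF)) with
        (lval (nth (k - 1) (snd (sigP i j x)) FF) - t') by ring. tauto.
    + pose proof (MS k Hk). replace (x k + - x j) with (x k - x j) by ring.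
      replace (repP i j (sigP i j x) k + - t') with (repP i j (sigP i j x) k - t') by ring. tauto.
  - intros [s w] Hc. apply in_prod_iff in Hc. destruct Hc as [Hs Hw]. apply SD_intro.
    + intros k Hk. apply repP_out; lia.
    + unfold b. rewrite ip_plus by lia. rewrite repP_j, repP_i by lia. ring.
    + intros g Hg Cg. pose proof (tP_val w) as T.
      destruct (cut_plus_fwd n i j g H1 H2 H3 Cg) as [k [Hk1 [[Hk [Hki E]]|[[Hk E]|[[Hk E]|[[Hk E]|[Hk E]]]]]]];
      subst g; first [rewrite !ip_plus by lia | rewrite !ip_minus by lia]; rewrite ?repP_j, ?repP_i by lia; simpl.
      * destruct (Nat.lt_ge_cases k i) as [L|L].
        -- rewrite repP_low by lia. simpl. pose proof (lval_ne (nth (k - 1) w FF) _ T). lra.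
        -- rewrite repP_mid by lia. simpl. destruct (nth _ s false); lra.
      * rewrite repP_low by lia. simpl. pose proof (lval_ne (nth (k - 1) w FF) _ T). lra.
      * rewrite repP_low by lia. simpl. pose proof (lval_ne (nth (k - 1) w FF) _ T). lra.
      * rewrite repP_low by lia. simpl. pose proof (lval_ne (nth (k - 1) w FF) _ T). lra.
      * rewrite repP_mid by lia. simpl. destruct (nth _ s false); lra.
Qed.

Open Scope R_scope.

Lemma num_sets_ext (P P' : (vec -> Prop) -> Prop) N : (forall S, P S <-> P' S) -> num_sets P N -> num_sets P' N.
Proof. intros E [f [A [B C]]]. exists f. split; [|split]; auto. intros; apply E; auto.
  intros S H. apply C, E; auto. Qed.

Lemma num_union {I : Type} (l : list I) (Pf : I -> (vec -> Prop) -> Prop) (N : I -> nat) :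
  NoDup l -> (forall c, In c l -> num_sets (Pf c) (N c)) ->
  (forall c c' S S', In c l -> In c' l -> Pf c S -> Pf c' S' -> same_set S S' -> c = c') ->
  num_sets (fun S => exists c, In c l /\ Pf c S) (list_sum (map N l)).
Proof. induction l as [|a l IH]; intros ND H D.
  - exists (fun _ _ => False). split; [|split]; intros; simpl in *; try lia. destruct H0 as [c [[] _]].
  - inversion ND; subst.
    destruct (H a (or_introl eq_refl)) as [fa [A1 [A2 A3]]].
    destruct (IH H3 (fun c Hc => H c (or_intror Hc)) (fun c c' S S' Hc Hc' => D c c' S S' (or_intror Hc) (or_intror Hc')))
      as [fl [B1 [B2 B3]]].
    simpl. exists (fun k => if Nat.ltb k (N a) then fa k else fl (k - N a)%nat). split; [|split].
    + intros k Hk. destruct (Nat.ltb_spec k (N a)). exists a; split; simpl; auto.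
      destruct (B1 (k - N a)%nat ltac:(lia)) as [c [Hc P]]. exists c; split; simpl; auto.
    + intros k k' Hk Hk' E. destruct (Nat.ltb_spec k (N a)), (Nat.ltb_spec k' (N a)).
      * apply A2; auto.
      * exfalso. destruct (B1 (k' - N a)%nat ltac:(lia)) as [c [Hc P]].
        assert (a = c) by (apply (D a c (fa k) (fl (k' - N a)%nat)); simpl; auto). subst; contradiction.
      * exfalso. destruct (B1 (k - N a)%nat ltac:(lia)) as [c [Hc P]].
        assert (c = a) by (apply (D c a (fl (k - N a)%nat) (fa k')); simpl; auto). subst; contradiction.
      * assert (k - N a = k' - N a)%nat by (apply B2; auto; lia). lia.
    + intros S [c [[E|Hc] P]].
      * subst. destruct (A3 S P) as [k [Hk E]]. exists k. split. lia.
        destruct (Nat.ltb_spec k (N c)); auto; lia.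
      * destruct (B3 S (ex_intro _ c (conj Hc P))) as [k [Hk E]]. exists (k + N a)%nat. split. lia.
        destruct (Nat.ltb_spec (k + N a) (N a)). lia. replace (k + N a - N a)%nat with k by lia. auto.
Qed.

Lemma perturb (L : list vec) (Q : vec -> Prop) (a c : vec -> R) :
  (forall g, In g L -> Q g -> a g <> 0) ->
  exists d, 0 < d /\ forall g, In g L -> Q g -> (0 < a g <-> 0 < a g + d * c g) /\ a g + d * c g <> 0.
Proof. intros H.
  destruct (finmin L Q (fun g => Rabs (a g) / (Rabs (c g) + 1))) as [m [Hm Hm']].
  { intros g Hg Qg. apply Rdiv_lt_0_compat. apply Rabs_pos_lt; auto. pose proof (Rabs_pos (c g)); lra. }
  exists (m / 2). split. lra. intros g Hg Qg. specialize (Hm' g Hg Qg). specialize (H g Hg Qg).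
  pose proof (Rabs_pos (c g)). assert (Hd : m / 2 * Rabs (c g) < Rabs (a g)).
  { apply Rmult_le_compat_r with (r := Rabs (c g) + 1) in Hm'; [|lra].
    unfold Rdiv in Hm'. rewrite Rmult_assoc, Rinv_l, Rmult_1_r in Hm' by lra.
    pose proof (Rabs_pos_lt _ H). nra. }
  assert (Hb : Rabs (m / 2 * c g) < Rabs (a g)).
  { rewrite Rabs_mult, (Rabs_right (m/2)) by lra. auto. }
  destruct (Rcase_abs (a g)) as [Ha|Ha]; [rewrite (Rabs_left (a g)) in Hb by auto|rewrite (Rabs_right (a g)) in Hb by auto];
  destruct (Rcase_abs (m / 2 * c g)) as [Hc|Hc]; [rewrite (Rabs_left (m/2 * c g)) in Hb by auto|rewrite (Rabs_right (m/2 * c g)) in Hb by auto| rewrite (Rabs_left (m/2 * c g)) in Hb by auto|rewrite (Rabs_right (m/2 * c g)) in Hb by auto];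
  split; try split; intros; lra.
Qed.

Lemma shard_sub_H n b x y : closure n (component (SD n b) x) y -> ip n y b = 0.
Proof. intros C.
  assert (Z : forall z, component (SD n b) x z -> ip n z b = 0).
  { intros z Cz. unfold SD in Cz. apply comp_char in Cz. destruct Cz as [_ [[_ [Z _]] _]]. apply Z; simpl; auto. }
  pose proof (closure_ge n _ b y (fun z Cz => Req_le _ _ (eq_sym (Z z Cz))) C).
  pose proof (closure_ge n (component (SD n b) x) (fun k => - b k) y) as G. rewrite ip_opp_r in G.
  assert (0 <= - ip n y b); [|lra]. apply G; auto. intros z Cz. rewrite ip_opp_r, (Z z Cz). lra.
Qed.

Lemma shard_disjoint n b b' S S' : In b (PhiD n) -> In b' (PhiD n) ->
  is_shard_of n (PhiD n) b S -> is_shard_of n (PhiD n) b' S' -> same_set S S' -> b = b'.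
Proof. intros Hb Hb' P P' E. destruct (classic (b = b')) as [|N]; auto. exfalso.
  apply shard_of_iff in P. apply shard_of_iff in P'.
  destruct P as [x [Dx Ex]]. destruct P' as [x' [Dx' Ex']].
  assert (Y : exists y, component (SD n b) x y /\ ip n y b' <> 0).
  { destruct (Req_dec (ip n x b') 0) as [Z|Z].
    - set (c := ip n b' b). assert (Hc : c = -1 \/ c = 0 \/ c = 1) by (apply ip_root_ne; auto).
      set (w := fun k => 2 * b' k + (- c) * b k).
      assert (Vw : in_V n w) by (intros k Hk; unfold w; rewrite (PhiD_V n b), (PhiD_V n b'); auto; ring).
      assert (wb : ip n w b = 0) by (unfold w; rewrite ip_lin_l, (ip_root_self n b Hb); unfold c; ring).
      assert (wb' : ip n w b' = 4 - c * c) by (unfold w; rewrite ip_lin_l, (ip_root_self n b' Hb'), (ip_sym n b b'); unfold c; ring).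
      pose proof (SD_facts n b x Dx) as Dxx. destruct Dxx as [Vx [Zx Nx]].
      destruct (perturb (PhiD n) (fun g => cuts n (PhiD n) g b) (fun g => ip n x g) (fun g => ip n w g) Nx) as [d [Hd Pd]].
      exists (fun k => 1 * x k + d * w k). split.
      + apply comp_char. split; auto. split.
        * apply SD_intro. intros k Hk. rewrite Vx, Vw; auto; ring.
          rewrite ip_lin_l, Zx, wb; ring.
          intros g Hg Cg. rewrite ip_lin_l. destruct (Pd g Hg Cg) as [_ Q]. lra.
        * intros g Hg Cg. rewrite ip_lin_l. destruct (Pd g Hg Cg) as [Q _]. rewrite Rmult_1_l. auto.
      + rewrite ip_lin_l, Z, wb'. assert (c * c <= 1) by (destruct Hc as [F|[F|F]]; rewrite F; lra). nra.
    - exists x. split; auto. apply comp_char. split; auto. split; auto. intros g _ _; tauto. }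
  destruct Y as [y [Cy Ny]]. apply Ny.
  apply (shard_sub_H n b' x'). apply Ex'. apply E. apply Ex.
  apply closure_self; auto. apply comp_char in Cy. apply Cy.
Qed.

Close Scope R_scope.

Lemma plus_count_eq a m : (2 ^ a * (2 * 3 ^ m - 2 ^ m) = 2 ^ (S a) * 3 ^ m - 2 ^ (a + m))%nat.
Proof. assert (H : (2 ^ m <= 3 ^ m)%nat) by (apply Nat.pow_le_mono_l; lia).
  rewrite Nat.mul_sub_distr_l, Nat.pow_add_r. simpl. f_equal. lia. Qed.

Lemma list_sum_map_add {A : Type} (f g : A -> nat) l :
  (list_sum (map f l) + list_sum (map g l) = list_sum (map (fun x => f x + g x) l))%nat.
Proof. induction l; simpl; lia. Qed.
Lemma list_sum_map_mul {A : Type} (f : A -> nat) c l :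
  list_sum (map (fun x => c * f x) l) = (c * list_sum (map f l))%nat.
Proof. induction l; simpl; lia. Qed.
Lemma list_sum_const {A : Type} (c : nat) (l : list A) : list_sum (map (fun _ => c) l) = (length l * c)%nat.
Proof. induction l; simpl; lia. Qed.
Lemma list_sum_ext {A : Type} (f g : A -> nat) l : (forall x, In x l -> f x = g x) -> list_sum (map f l) = list_sum (map g l).
Proof. intros H. f_equal. apply map_ext_in; auto. Qed.
Lemma list_sum_snoc {A : Type} (f : A -> nat) l a : list_sum (map f (l ++ a :: nil)) = (list_sum (map f l) + f a)%nat.
Proof. rewrite map_app, list_sum_app. simpl. lia. Qed.

Lemma sumA m : (list_sum (map (fun i => 2 ^ (m - i)) (seq 1 m)) + 1 = 2 ^ m)%nat.
Proof. induction m. simpl; auto. rewrite seq_S, list_sum_snoc.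
  rewrite (list_sum_ext _ (fun i => 2 * 2 ^ (m - i))%nat).
  rewrite list_sum_map_mul. replace (S m - (1 + m))%nat with 0%nat by lia. simpl in *. lia.
  intros i Hi. apply in_seq in Hi. replace (S m - i)%nat with (S (m - i)) by lia. auto. Qed.

Lemma sumB m : (list_sum (map (fun i => 2 ^ (S m - i) * 3 ^ (i - 1)) (seq 1 m)) + 2 ^ (S m) = 2 * 3 ^ m)%nat.
Proof. induction m. simpl; auto. rewrite seq_S, list_sum_snoc.
  rewrite (list_sum_ext _ (fun i => 2 * (2 ^ (S m - i) * 3 ^ (i - 1)))%nat).
  rewrite list_sum_map_mul. replace (S (S m) - (1 + m))%nat with 1%nat by lia.
  replace (1 + m - 1)%nat with m by lia. simpl in *. lia.
  intros i Hi. apply in_seq in Hi. replace (S (S m) - i)%nat with (S (S m - i)) by lia. simpl. lia. Qed.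

Definition Fp (i j : nat) : nat := (2 ^ (j - i - 1) + 2 ^ (j - i) * 3 ^ (i - 1) - 2 ^ (j - 2))%nat.

Lemma Fp_ge i m : (1 <= i <= m)%nat -> (2 ^ (m - 1) <= 2 ^ (S m - i) * 3 ^ (i - 1))%nat.
Proof. intros H. assert (2 ^ (i - 1) <= 3 ^ (i - 1))%nat by (apply Nat.pow_le_mono_l; lia).
  replace (m - 1)%nat with ((S m - i) + (i - 1) - 1)%nat by lia.
  destruct (Nat.eq_dec i 1). subst. replace (S m - 1 + (1 - 1) - 1)%nat with (m - 1)%nat by lia.
  replace (S m - 1)%nat with (S (m - 1)) by lia. simpl. lia.
  replace (S m - i + (i - 1) - 1)%nat with ((S m - i) + (i - 2))%nat by lia.
  rewrite Nat.pow_add_r. apply Nat.mul_le_mono_l.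
  replace (i - 1)%nat with (S (i - 2)) by lia. simpl. pose proof (Nat.pow_le_mono_l 2 3 (i - 2) ltac:(lia)). lia.
Qed.

Lemma inner_closed m : (1 <= m)%nat ->
  (list_sum (map (fun i => Fp i (S m)) (seq 1 m)) + (m + 2) * 2 ^ (m - 1) + 1 = 2 * 3 ^ m)%nat.
Proof. intros Hm.
  assert (E : (list_sum (map (fun i => Fp i (S m)) (seq 1 m)) + list_sum (map (fun _ => 2 ^ (m - 1)) (seq 1 m)) =
     list_sum (map (fun i => 2 ^ (m - i)) (seq 1 m)) + list_sum (map (fun i => 2 ^ (S m - i) * 3 ^ (i - 1)) (seq 1 m)))%nat).
  { rewrite !list_sum_map_add. apply list_sum_ext. intros i Hi. apply in_seq in Hi.
    unfold Fp. pose proof (Fp_ge i m ltac:(lia)). replace (S m - i - 1)%nat with (m - i)%nat by lia.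
    replace (S m - 2)%nat with (m - 1)%nat by lia. lia. }
  rewrite list_sum_const, length_seq in E. pose proof (sumA m). pose proof (sumB m).
  destruct m. lia. replace (S m - 1)%nat with m in * by lia.
  simpl (2 ^ S (S m))%nat in *. simpl (2 ^ S m)%nat in *. lia.
Qed.

Lemma total_closed n : (sum_pairs n Fp + n * 2 ^ (n - 1) + n + 1 = 3 ^ n)%nat.
Proof. induction n. simpl; auto. unfold sum_pairs in *. rewrite seq_S, list_sum_snoc.
  replace (1 + n - 1)%nat with n by lia. replace (1 + n)%nat with (S n) by lia.
  destruct n. simpl. auto.
  pose proof (inner_closed (S n) ltac:(lia)).
  replace (S (S n) - 1)%nat with (S n) by lia. replace (S n - 1)%nat with n in * by lia.
  simpl (2 ^ S n)%nat. simpl (3 ^ S (S n))%nat. simpl (3 ^ S n)%nat in *. nia.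
Qed.

Open Scope R_scope.

Definition rootof (c : nat * nat * bool) : vec :=
  match c with (i, j, t) => if t then root_plus i j else root_minus i j end.
Definition Ncount (c : nat * nat * bool) : nat :=
  match c with (i, j, t) => if t then (2 ^ (j - i) * 3 ^ (i - 1) - 2 ^ (j - 2))%nat else (2 ^ (j - i - 1))%nat end.
Definition idx (n : nat) : list (nat * nat * bool) :=
  flat_map (fun j => flat_map (fun i => (i, j, false) :: (i, j, true) :: nil) (seq 1 (j - 1))) (seq 1 n).

Lemma idx_in n c : In c (idx n) <-> exists i j t, c = (i, j, t) /\ (1 <= i)%nat /\ (i < j)%nat /\ (j <= n)%nat.
Proof. unfold idx. rewrite in_flat_map. split.
  - intros [j [Hj Hc]]. apply in_seq in Hj. apply in_flat_map in Hc. destruct Hc as [i [Hi Hc]]. apply in_seq in Hi.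
    simpl in Hc. destruct Hc as [E|[E|[]]]; subst; do 3 eexists; (split; [reflexivity|repeat split; lia]).
  - intros [i [j [t [E [H1 [H2 H3]]]]]]. subst. exists j. split. apply in_seq; lia.
    apply in_flat_map. exists i. split. apply in_seq; lia. destruct t; simpl; auto.
Qed.

Lemma NoDup_flat_map' {A B : Type} (f : A -> list B) l : NoDup l -> (forall x, In x l -> NoDup (f x)) ->
  (forall x y z, In x l -> In y l -> x <> y -> In z (f x) -> ~ In z (f y)) -> NoDup (flat_map f l).
Proof. induction l as [|a l IH]; intros ND H D; simpl. constructor. inversion ND; subst.
  apply NoDup_app. apply H; simpl; auto. apply IH; auto. intros; apply H; simpl; auto.
  intros x y z Hx Hy; apply D; simpl; auto.
  intros z Z1 Z2. apply in_flat_map in Z2. destruct Z2 as [y [Hy Z2]].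
  apply (D a y z); simpl; auto. intros E; subst; contradiction. Qed.

Lemma idx_nodup n : NoDup (idx n).
Proof. unfold idx. apply NoDup_flat_map'. apply seq_NoDup.
  - intros j _. apply NoDup_flat_map'. apply seq_NoDup.
    + intros i _. constructor. intros [E|[]]; discriminate. constructor. intros []. constructor.
    + intros i i' z _ _ N Z1 Z2. simpl in Z1, Z2. destruct Z1 as [E|[E|[]]]; destruct Z2 as [F|[F|[]]]; subst;
        try discriminate; injection F; intros; subst; auto.
  - intros j j' z _ _ N Z1 Z2. apply in_flat_map in Z1. apply in_flat_map in Z2.
    destruct Z1 as [i [_ Z1]]. destruct Z2 as [i' [_ Z2]]. simpl in Z1, Z2.
    destruct Z1 as [E|[E|[]]]; destruct Z2 as [F|[F|[]]]; subst; try discriminate; injection F; intros; subst; auto.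
Qed.

Lemma rv_j t i j : (i < j)%nat -> rootof (i, j, t) j = 1.
Proof. intros. destruct t; simpl; unfold root_minus, root_plus, vsub, vadd, eps;
  rewrite Nat.eqb_refl; destruct (Nat.eqb_spec j i); try lia; ring. Qed.
Lemma rv_i t i j : (i < j)%nat -> rootof (i, j, t) i = if t then 1 else -1.
Proof. intros. destruct t; simpl; unfold root_minus, root_plus, vsub, vadd, eps;
  rewrite Nat.eqb_refl; destruct (Nat.eqb_spec i j); try lia; ring. Qed.
Lemma rv_o t i j m : m <> i -> m <> j -> rootof (i, j, t) m = 0.
Proof. intros. destruct t; simpl; unfold root_minus, root_plus, vsub, vadd, eps;
  destruct (Nat.eqb_spec m i), (Nat.eqb_spec m j); try lia; ring. Qed.

Lemma rootof_inj i j t k l t' : (1 <= i)%nat -> (i < j)%nat -> (1 <= k)%nat -> (k < l)%nat ->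
  rootof (i, j, t) = rootof (k, l, t') -> (i, j, t) = (k, l, t').
Proof. intros H1 H2 H3 H4 E.
  assert (Ejl : j = l).
  { destruct (Nat.lt_total j l) as [L|[L|L]]; auto; exfalso.
    - pose proof (equal_f E l) as F. rewrite rv_o, rv_j in F by lia. lra.
    - pose proof (equal_f E j) as F. rewrite rv_j, rv_o in F by lia. lra. }
  subst l.
  assert (Eik : i = k).
  { destruct (Nat.lt_total i k) as [L|[L|L]]; auto; exfalso.
    - pose proof (equal_f E i) as F. rewrite rv_i, rv_o in F by lia. destruct t; lra.
    - pose proof (equal_f E k) as F. rewrite rv_o, rv_i in F by lia. destruct t'; lra. }
  subst k. pose proof (equal_f E i) as F. rewrite !rv_i in F by lia.
  destruct t, t'; auto; lra.
Qed.

Close Scope R_scope.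

Lemma shards_plus n i j : (1 <= i)%nat -> (i < j)%nat -> (j <= n)%nat ->
  num_sets (is_shard_of n (PhiD n) (root_plus i j)) (2 ^ (j - i) * 3 ^ (i - 1) - 2 ^ (j - 2))%nat.
Proof. intros. pose proof (shards_plus_raw n i j H H0 H1) as Hs.
  rewrite (plus_count_eq (j - i - 1) (i - 1)) in Hs.
  replace (Datatypes.S (j - i - 1)) with (j - i)%nat in Hs by lia.
  replace (j - i - 1 + (i - 1))%nat with (j - 2)%nat in Hs by lia. exact Hs. Qed.

Lemma list_sum_flat_map {A B : Type} (N : B -> nat) (f : A -> list B) l :
  list_sum (map N (flat_map f l)) = list_sum (map (fun x => list_sum (map N (f x))) l).
Proof. induction l; simpl; auto. rewrite map_app, list_sum_app, IHl. auto. Qed.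

Lemma shards_total n :
  num_sets (is_shard n (PhiD n)) (sum_pairs n (fun i j => 2 ^ (j - i - 1) + 2 ^ (j - i) * 3 ^ (i - 1) - 2 ^ (j - 2))%nat).
Proof.
  assert (Sum : list_sum (map Ncount (idx n)) = sum_pairs n (fun i j => 2 ^ (j - i - 1) + 2 ^ (j - i) * 3 ^ (i - 1) - 2 ^ (j - 2))%nat).
  { unfold idx, sum_pairs. rewrite list_sum_flat_map. f_equal. apply map_ext_in. intros j Hj. apply in_seq in Hj.
    rewrite list_sum_flat_map. f_equal. apply map_ext_in. intros i Hi. apply in_seq in Hi. simpl.
    pose proof (Fp_ge i (j - 1) ltac:(lia)). replace (S (j - 1) - i)%nat with (j - i)%nat in H by lia.
    replace (j - 1 - 1)%nat with (j - 2)%nat in H by lia. lia. }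
  rewrite <- Sum.
  apply (num_sets_ext (fun S => exists c, In c (idx n) /\ is_shard_of n (PhiD n) (rootof c) S)).
  - intros S. unfold is_shard. split.
    + intros [c [Hc P]]. exists (rootof c). split; auto. apply idx_in in Hc.
      destruct Hc as [i [j [t [E [? [? ?]]]]]]. subst. apply In_PhiD. exists i, j. repeat split; auto. destruct t; auto.
    + intros [b [Hb P]]. apply In_PhiD in Hb. destruct Hb as [i [j [? [? [? [E|E]]]]]]; subst.
      exists (i, j, false). split; auto. apply idx_in. exists i, j, false; auto.
      exists (i, j, true). split; auto. apply idx_in. exists i, j, true; auto.
  - apply num_union. apply idx_nodup.
    + intros c Hc. apply idx_in in Hc. destruct Hc as [i [j [t [E [? [? ?]]]]]]. subst. destruct t; simpl.
      apply shards_plus; auto. apply shards_minus; auto.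
    + intros c c' S S' Hc Hc' P P' E.
      apply idx_in in Hc. destruct Hc as [i [j [t [E1 [? [? ?]]]]]].
      apply idx_in in Hc'. destruct Hc' as [k [l [t' [E2 [? [? ?]]]]]]. subst.
      apply rootof_inj; auto. apply (shard_disjoint n _ _ S S'); auto.
      apply In_PhiD; exists i, j; repeat split; auto; destruct t; auto.
      apply In_PhiD; exists k, l; repeat split; auto; destruct t'; auto.
Qed.

Theorem mainTheorem10 (n : nat) (hn : (2 <= n)%nat) :
  (forall i j, (1 <= i)%nat -> (i < j)%nat -> (j <= n)%nat ->
     num_sets (is_shard_of n (PhiD n) (root_minus i j)) (2 ^ (j - i - 1))%nat) /\
  (forall i j, (1 <= i)%nat -> (i < j)%nat -> (j <= n)%nat ->
     num_sets (is_shard_of n (PhiD n) (root_plus i j))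
              (2 ^ (j - i) * 3 ^ (i - 1) - 2 ^ (j - 2))%nat) /\
  num_sets (is_shard n (PhiD n))
           (sum_pairs n (fun i j => 2 ^ (j - i - 1) + 2 ^ (j - i) * 3 ^ (i - 1) - 2 ^ (j - 2))%nat) /\
  sum_pairs n (fun i j => 2 ^ (j - i - 1) + 2 ^ (j - i) * 3 ^ (i - 1) - 2 ^ (j - 2))%nat
    = (3 ^ n - n * 2 ^ (n - 1) - n - 1)%nat.
Proof.
  split. intros; apply shards_minus; auto.
  split. intros; apply shards_plus; auto.
  split. apply shards_total.
  pose proof (total_closed n). unfold Fp in H. lia.
Qed.
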